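(* Let $\tau_0>0$, $R>0$, $x_0\in\mathbb{H}^3$. For $\mu=1,2,3$ let $f^\mu\in C^2(\mathbb{H}^3)$, $g^\mu\in C^1(\mathbb{H}^3)$ with supports contained in the geodesic ball $B_R(x_0)$. For $\tau>\tau_0$ and $x\in\mathbb{H}^3$ define $$A^\mu(\tau,x)=\partial_\tau\big(\sinh(\tau-\tau_0)M_{f^\mu}(\tau-\tau_0,x)\big)+\sinh(\tau-\tau_0)M_{g^\mu}(\tau-\tau_0,x),$$ equivalently $$A^\mu(\tau,x)=\frac{1}{4\pi\sinh^2(\tau-\tau_0)}\int_{S_{\tau-\tau_0}(x)}\Big(\sinh(\tau-\tau_0)g^\mu(y)+\cosh(\tau-\tau_0)f^\mu(y)+\sinh(\tau-\tau_0)\,\partial_{\nu}f^\mu(y)\Big)dS(y),$$ where $\partial_\nu$ is the radial derivative along the geodesic sphere. Then $A^\mu$ decays at rate $\mathcal{O}(e^{-\tau})$: there exist $C,T>0$ such that $|A^\mu(\tau,x)|\le Ce^{-\tau}$ for all $\tau\ge T$ and all $x\in\mathbb{H}^3$. (Consequently, in the time variable $t=\sinh\tau-\tau$ the decay rate is $\mathcal{O}(t^{-1})$.)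
   Context: $\mathbb{H}^3$ is hyperbolic 3-space, modeled as the upper half-space $\{(x,y,z):z>0\}$ with metric $(dx^2+dy^2+dz^2)/z^2$. This arises from the Coulomb-gauge electromagnetic wave equation $\partial_\tau^2A^\mu-\Delta_\sigma A^\mu=0$ ($\Delta_\sigma$ the Laplace–Beltrami operator of $\mathbb{H}^3$) on the hyperbolic ($K=-1$) Friedmann–Robertson–Walker space-time $ds^2=a^2(\tau)(-d\tau^2+(dx^2+dy^2+dz^2)/z^2)$, $a(\tau)=\cosh\tau-1$, $t=\sinh\tau-\tau$, with data $(f^\mu,g^\mu)$ at $\tau_0$. $S_r(x)$ is the geodesic sphere of radius $r$ centered at $x$, $dS$ its hyperbolic surface measure (total area $4\pi\sinh^2 r$), $B_R(x_0)$ the closed geodesic ball, and the geodesic spherical mean is $M_h(r,x)=\frac{1}{4\pi\sinh^2 r}\int_{S_r(x)}h(y)\,dS(y)$. *)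

(* Defs.v *)
From Stdlib Require Import Reals Lra ClassicalEpsilon.
Open Scope R_scope.

Definition epsilon_inh {A : Type} (H : inhabited A) : A :=
  epsilon H (fun _ => True).

(* Points of R^3; H^3 = upper half-space {z > 0}. *)
Definition pt : Type := (R * R * R)%type.
Definition px (p : pt) : R := fst (fst p).
Definition py (p : pt) : R := snd (fst p).
Definition pz (p : pt) : R := snd p.
Definition inH3 (p : pt) : Prop := 0 < pz p.

Definition edist2 (p q : pt) : R :=
  (px p - px q) ^ 2 + (py p - py q) ^ 2 + (pz p - pz q) ^ 2.

(* hyperbolic distance: arcosh (1 + |p-q|^2 / (2 z_p z_q)), arcosh u = ln (u + sqrt (u^2-1)) *)
Definition hdist (p q : pt) : R :=
  let u := 1 + edist2 p q / (2 * pz p * pz q) in ln (u + sqrt (u * u - 1)).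

(* Riemann integral, with value 0 when not integrable *)
Definition RInt (f : R -> R) (a b : R) : R :=
  match excluded_middle_informative (inhabited (Riemann_integrable f a b)) with
  | left H => RiemannInt (epsilon_inh H)
  | right _ => 0
  end.

(* The geodesic sphere S_r(x) in the half-space model is the Euclidean sphere
   with centre (x1, x2, z cosh r) and radius z sinh r; parametrised by
   (th, ph) in [0,pi] x [0,2pi]. *)
Definition sphere_pt (x : pt) (r th ph : R) : pt :=
  (px x + pz x * sinh r * sin th * cos ph,
   py x + pz x * sinh r * sin th * sin ph,
   pz x * cosh r + pz x * sinh r * cos th).

(* hyperbolic surface measure dS = (Euclidean area element) / y_z^2 in these coordinates *)
Definition sphere_density (r th : R) : R :=
  sinh r ^ 2 * sin th / (cosh r + sinh r * cos th) ^ 2.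

Definition sphere_integral (h : pt -> R) (x : pt) (r : R) : R :=
  RInt (fun th => RInt (fun ph => h (sphere_pt x r th ph) * sphere_density r th) 0 (2 * PI))
       0 PI.

Definition spherical_mean (h : pt -> R) (r : R) (x : pt) : R :=
  sphere_integral h x r / (4 * PI * sinh r ^ 2).

Definition cont_H3 (f : pt -> R) : Prop :=
  forall p, inH3 p -> forall eps, 0 < eps -> exists delta, 0 < delta /\
    forall q, inH3 q -> sqrt (edist2 p q) < delta -> Rabs (f q - f p) < eps.

Definition has_partials (f d1 d2 d3 : pt -> R) : Prop :=
  forall p, inH3 p ->
    derivable_pt_lim (fun t => f (t, py p, pz p)) (px p) (d1 p) /\
    derivable_pt_lim (fun t => f (px p, t, pz p)) (py p) (d2 p) /\
    derivable_pt_lim (fun t => f (px p, py p, t)) (pz p) (d3 p).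

Definition C1_H3 (f : pt -> R) : Prop :=
  exists d1 d2 d3, has_partials f d1 d2 d3 /\ cont_H3 d1 /\ cont_H3 d2 /\ cont_H3 d3.

Definition C2_H3 (f : pt -> R) : Prop :=
  exists d1 d2 d3, has_partials f d1 d2 d3 /\ C1_H3 d1 /\ C1_H3 d2 /\ C1_H3 d3.

Definition supp_in_ball (f : pt -> R) (x0 : pt) (Rad : R) : Prop :=
  forall y, inH3 y -> Rad < hdist x0 y -> f y = 0.

(* Main.v *)
Require Import Defs.
From Stdlib Require Import Reals.
Open Scope R_scope.
From Stdlib Require Import Lra Lia Psatz ClassicalEpsilon Classical_Prop FunctionalExtensionality.
From Coquelicot Require Import Coquelicot.
Open Scope R_scope.

Lemma DRInt_eq (h : R -> R) a b : ex_RInt h a b -> Defs.RInt h a b = RInt h a b.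
Proof.
  intros H. unfold Defs.RInt. destruct (excluded_middle_informative _) as [Hi|Hn].
  - rewrite (RInt_Reals h a b (epsilon_inh Hi)). reflexivity.
  - exfalso; apply Hn; constructor; apply ex_RInt_Reals_0; exact H.
Qed.

Lemma RInt_zero_fun (g : R -> R) a b :
  (forall x, Rmin a b < x < Rmax a b -> g x = 0) -> RInt g a b = 0.
Proof.
  intros H. rewrite (RInt_ext g (fun _ => 0)) by exact H.
  rewrite RInt_const. unfold scal; simpl; unfold mult; simpl; ring.
Qed.

Lemma ex_RInt_cont (g : R -> R) a b :
  (forall t, Rmin a b <= t <= Rmax a b -> continuous g t) -> ex_RInt g a b.
Proof. intros; apply (ex_RInt_continuous (V := R_CompleteNormedModule)); auto. Qed.

Lemma RInt_small_support (g : R -> R) A B t0 d M :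
  A <= B -> 0 <= d ->
  (forall t, A <= t <= B -> continuous g t) ->
  (forall t, A <= t <= B -> Rabs (g t) <= M) ->
  (forall t, A <= t <= B -> d < Rabs (t - t0) -> g t = 0) ->
  Rabs (RInt g A B) <= 2*d*M.
Proof.
  intros HAB Hd Hc Hb Hz.
  assert (HM : 0 <= M) by (specialize (Hb A); assert (h:=Rabs_pos (g A)); lra).
  set (p := Rmax A (Rmin B (t0 - d))).
  set (q := Rmax p (Rmin B (t0 + d))).
  assert (Hp : A <= p <= B) by (unfold p; unfold Rmax, Rmin; repeat destruct Rle_dec; lra).
  assert (Hq : p <= q <= B) by (unfold q; unfold Rmax, Rmin; repeat destruct Rle_dec; lra).
  assert (Hex : forall u v, A <= u -> u <= v -> v <= B -> ex_RInt g u v).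
  { intros u v H1 H2 H3. apply ex_RInt_cont. intros t Ht.
    rewrite Rmin_left in Ht by lra. rewrite Rmax_right in Ht by lra. apply Hc; lra. }
  rewrite <- (RInt_Chasles g A p B) by (apply Hex; lra).
  rewrite <- (RInt_Chasles g p q B) by (apply Hex; lra).
  rewrite (RInt_zero_fun g A p).
  2:{ intros x Hx. rewrite Rmin_left in Hx by lra. rewrite Rmax_right in Hx by lra.
      apply Hz; [lra|]. revert Hx. unfold p, Rmax, Rmin.
      repeat destruct Rle_dec; intros; rewrite Rabs_left; lra. }
  rewrite (RInt_zero_fun g q B).
  2:{ intros x Hx. rewrite Rmin_left in Hx by lra. rewrite Rmax_right in Hx by lra.
      apply Hz; [lra|]. revert Hx. unfold q, p, Rmax, Rmin.
      repeat destruct Rle_dec; intros; rewrite Rabs_right; lra. }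
  change (plus 0 (plus (RInt g p q) 0)) with (0 + (RInt g p q + 0)).
  rewrite Rplus_0_l, Rplus_0_r.
  eapply Rle_trans.
  - apply abs_RInt_le_const; [lra| apply Hex; lra |]. intros t Ht; apply Hb; lra.
  - assert (q - p <= 2 * d).
    { unfold q, p; unfold Rmax, Rmin; repeat destruct Rle_dec; lra. }
    nra.
Qed.

Lemma RInt_periodic_shift (h : R -> R) A :
  (forall t, continuous h t) -> (forall t, h (t + 2*PI) = h t) ->
  RInt h A (A + 2*PI) = RInt h 0 (2*PI).
Proof.
  intros Hc Hp.
  set (G := fun y => RInt h y (y + 2*PI)).
  assert (HD : forall y, is_derive G y 0).
  { intros y. unfold G.
    assert (Hd := is_derive_RInt_bound_comp h (fun a b => RInt h a b)
                   (fun y => y) (fun y => y + 2*PI) 1 1 y).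
    replace 0 with (minus (scal 1 (h (y + 2*PI))) (scal 1 (h y))).
    2:{ rewrite Hp. unfold minus, plus, opp, scal; simpl; unfold mult; simpl; ring. }
    apply Hd.
    - apply filter_forall. intros u. apply (RInt_correct (V := R_CompleteNormedModule)). apply ex_RInt_cont.
      intros; apply Hc.
    - apply Hc.
    - apply Hc.
    - apply (is_derive_id y).
    - auto_derive; auto; ring. }
  destruct (MVT_gen G 0 A (fun _ => 0)) as [c [_ Hc2]].
  - intros x _; apply HD.
  - intros x _. apply continuity_pt_filterlim. apply (ex_derive_continuous (K := R_AbsRing) (V := R_NormedModule)).
    exists 0; apply HD.
  - unfold G in Hc2. rewrite Rplus_0_l in Hc2. lra.
Qed.

Lemma one_minus_cos_ge t : Rabs t <= PI -> t^2/18 <= 1 - cos t.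
Proof.
  intros Ht.
  replace t with (2 * (t/2)) at 2 by field. rewrite cos_2a_sin.
  set (x := Rabs (t/2)).
  assert (Hx0 : 0 <= x) by apply Rabs_pos.
  assert (Hx1 : x <= 2).
  { unfold x. rewrite Rabs_div by lra. rewrite (Rabs_right 2) by lra.
    assert (H4 := PI_4). lra. }
  assert (Hs : sin x * sin x = sin (t/2) * sin (t/2)).
  { unfold x. destruct (Rle_dec 0 (t/2)).
    - rewrite Rabs_right by lra. reflexivity.
    - rewrite Rabs_left by lra. rewrite sin_neg. ring. }
  destruct (sin_bound x 0 Hx0) as [Hlb _].
  { assert (H4 := PI_4). assert (PI2 := PI2_3_2). 
    unfold x. rewrite Rabs_div by lra. rewrite (Rabs_right 2) by lra. lra. }
  assert (Hsa : sin_approx x (2*0+1) = x - x^3/6).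
  { unfold sin_approx, sin_term. simpl. field. }
  rewrite Hsa in Hlb.
  assert (Hsx : x/3 <= sin x) by nra.
  assert (Ht2 : t^2 = 4 * x^2).
  { unfold x. rewrite pow2_abs. field. }
  assert (sin x * sin x >= (x/3)*(x/3)) by nra.
  nra.
Qed.

Lemma sin_lipschitz a b : Rabs (sin a - sin b) <= Rabs (a - b).
Proof.
  destruct (MVT_abs sin cos b a) as [c [Hc _]].
  { intros c _. apply derivable_pt_lim_sin. }
  rewrite Hc. assert (Rabs (cos c) <= 1) by (apply Rabs_le; apply COS_bound).
  assert (0 <= Rabs (a - b)) by apply Rabs_pos. nra.
Qed.

Lemma ball_R (a b e : R) : ball a e b <-> Rabs (b - a) < e.
Proof. unfold ball; simpl. unfold AbsRing_ball, abs, minus, plus, opp; simpl. tauto. Qed.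

Lemma ball_prod {U V : UniformSpace} (a b : U * V) e :
  ball a e b <-> ball (fst a) e (fst b) /\ ball (snd a) e (snd b).
Proof. unfold ball at 1; simpl. unfold prod_ball. tauto. Qed.

Lemma cont_ballR {U : UniformSpace} (f : U -> R) x : continuous f x ->
  forall eps : posreal, locally x (fun y => Rabs (f y - f x) < eps).
Proof.
  intros H eps. unfold continuous in H. apply filterlim_locally with (eps := eps) in H.
  revert H. apply filter_imp. intros y Hy. apply ball_R in Hy. exact Hy.
Qed.

Definition bcont (h : pt -> R) (p : pt) := forall eps, 0 < eps -> exists delta, 0 < delta /\
  forall q, inH3 q -> Rabs (px q - px p) < delta -> Rabs (py q - py p) < delta ->
    Rabs (pz q - pz p) < delta -> Rabs (h q - h p) < eps.
Definition bcontH3 (h : pt -> R) := forall p, inH3 p -> bcont h p.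

Lemma cont_H3_bcont h : cont_H3 h -> bcontH3 h.
Proof.
  intros H p Hp eps He. destruct (H p Hp eps He) as [d [Hd Hq]].
  exists (d/2). split; [lra|]. intros q Hq3 H1 H2 H3. apply Hq; auto.
  assert (Hed : edist2 p q < d * d).
  { unfold edist2. rewrite <- (Rabs_Ropp (px q - px p)) in H1.
    rewrite <- (Rabs_Ropp (py q - py p)) in H2. rewrite <- (Rabs_Ropp (pz q - pz p)) in H3.
    replace (- (px q - px p)) with (px p - px q) in H1 by ring.
    replace (- (py q - py p)) with (py p - py q) in H2 by ring.
    replace (- (pz q - pz p)) with (pz p - pz q) in H3 by ring.
    rewrite <- (pow2_abs (px p - px q)), <- (pow2_abs (py p - py q)), <- (pow2_abs (pz p - pz q)).
    assert (0 <= Rabs (px p - px q)) by apply Rabs_pos.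
    assert (0 <= Rabs (py p - py q)) by apply Rabs_pos.
    assert (0 <= Rabs (pz p - pz q)) by apply Rabs_pos.
    assert (Rabs (px p - px q) ^ 2 <= (d/2)^2) by (apply pow_incr; lra).
    assert (Rabs (py p - py q) ^ 2 <= (d/2)^2) by (apply pow_incr; lra).
    assert (Rabs (pz p - pz q) ^ 2 <= (d/2)^2) by (apply pow_incr; lra).
    assert ((d/2)^2 = d*d/4) by field. assert (0 < d*d) by nra. lra. }
  rewrite <- (sqrt_square d) by lra. apply sqrt_lt_1; [unfold edist2; apply Rplus_le_le_0_compat; [apply Rplus_le_le_0_compat|]; apply pow2_ge_0| apply Rmult_le_pos; lra | exact Hed].
Qed.

Lemma comp_cont {U : UniformSpace} (h : pt -> R) (e1 e2 e3 : U -> R) (x : U) :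
  bcontH3 h -> continuous e1 x -> continuous e2 x -> continuous e3 x -> 0 < e3 x ->
  continuous (fun y => h (e1 y, e2 y, e3 y)) x.
Proof.
  intros Hh H1 H2 H3 Hz. apply filterlim_locally. intros eps.
  destruct (Hh (e1 x, e2 x, e3 x) Hz eps (cond_pos eps)) as [d [Hd Hq]].
  assert (Hd' : 0 < Rmin d (e3 x)) by (apply Rmin_pos; lra).
  set (dd := mkposreal _ Hd').
  apply cont_ballR with (eps := dd) in H1. apply cont_ballR with (eps := dd) in H2.
  apply cont_ballR with (eps := dd) in H3.
  generalize (filter_and _ _ H1 (filter_and _ _ H2 H3)). apply filter_imp.
  intros y [B1 [B2 B3]].
  apply ball_R. simpl in *.
  assert (Hm1 := Rmin_l d (e3 x)). assert (Hm2 := Rmin_r d (e3 x)).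
  apply Hq; unfold inH3, px, py, pz; simpl; try lra.
  apply Rabs_def2 in B3. lra.
Qed.

Lemma cont_slice {U : UniformSpace} (h : U -> R -> R) x t :
  continuous (fun q : U * R => h (fst q) (snd q)) (x, t) -> continuous (h x) t.
Proof.
  intros H. unfold continuous. apply filterlim_locally. intros eps.
  apply cont_ballR with (eps := eps) in H. destruct H as [d Hd]. exists d.
  intros s Hs. apply ball_R. apply (Hd (x, s)). apply ball_prod; split; [apply ball_center | exact Hs].
Qed.

Lemma cont_param {U : UniformSpace} (h : U -> R -> R) (A B : R) (x : U) :
  A <= B ->
  (forall t, A <= t <= B -> continuous (fun q : U * R => h (fst q) (snd q)) (x, t)) ->
  locally x (fun y => forall t, A <= t <= B -> continuous (h y) t) ->
  continuous (fun y => RInt (h y) A B) x.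
Proof.
  intros HAB Hj Hl. apply filterlim_locally. intros eps.
  set (e := eps / (2 * (B - A) + 2)).
  assert (He : 0 < e) by (unfold e; apply Rdiv_lt_0_compat; [apply cond_pos| lra]).
  assert (Hd : forall t, exists d : posreal, A <= t <= B -> forall y t',
     ball x d y -> ball t d t' -> Rabs (h y t' - h x t) < e).
  { intros t. destruct (Rle_dec A t) as [H1|H1]; [destruct (Rle_dec t B) as [H2|H2]|].
    - specialize (Hj t (conj H1 H2)). unfold continuous in Hj. apply filterlim_locally with (eps := mkposreal e He) in Hj. destruct Hj as [d Hd].
      exists d. intros _ y t' By Bt. specialize (Hd (y, t')).
      assert (ball (x, t) d (y, t')) by (apply ball_prod; simpl; auto).
      specialize (Hd H). apply ball_R in Hd. simpl in Hd. exact Hd.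
    - exists (mkposreal 1 Rlt_0_1). intros [_ Hc]; lra.
    - exists (mkposreal 1 Rlt_0_1). intros [Hc _]; lra. }
  set (delta := fun t => proj1_sig (constructive_indefinite_description _ (Hd t))).
  assert (Hdelta : forall t, A <= t <= B -> forall y t', ball x (delta t) y -> ball t (delta t) t' ->
     Rabs (h y t' - h x t) < e).
  { intros t. unfold delta. destruct (constructive_indefinite_description _ (Hd t)). simpl. auto. }
  destruct (compactness_value_1d A B delta) as [d Hcd].
  generalize (filter_and _ _ (locally_ball x d) Hl). apply filter_imp.
  intros y [By Hy]. apply ball_R.
  assert (Hpt : forall t, A <= t <= B -> Rabs (h y t - h x t) <= 2 * e).
  { intros t Ht. apply NNPP. intros Hn. apply (Hcd t Ht). intros [t0 [Ht0 [Hdt Hdd]]].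
    apply Hn.
    assert (X1 : Rabs (h y t - h x t0) < e).
    { apply Hdelta; [exact Ht0 | apply (ball_le x d); [exact Hdd| exact By] | apply ball_R;
      first [exact Hdt | rewrite Rabs_minus_sym; exact Hdt]]. }
    assert (X2 : Rabs (h x t - h x t0) < e).
    { apply Hdelta; [exact Ht0 | apply ball_center | apply ball_R; first [exact Hdt | rewrite Rabs_minus_sym; exact Hdt]]. }
    replace (h y t - h x t) with ((h y t - h x t0) - (h x t - h x t0)) by ring.
    eapply Rle_trans; [apply Rabs_triang|]. rewrite Rabs_Ropp. lra. }
  assert (Ey : ex_RInt (h y) A B).
  { apply ex_RInt_cont. intros t Ht. rewrite Rmin_left in Ht by lra. rewrite Rmax_right in Ht by lra. auto. }
  assert (Ex : ex_RInt (h x) A B).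
  { apply ex_RInt_cont. intros t Ht. rewrite Rmin_left in Ht by lra. rewrite Rmax_right in Ht by lra.
    apply cont_slice. apply Hj. exact Ht. }
  assert (Hm : RInt (h y) A B - RInt (h x) A B = RInt (fun t => h y t - h x t) A B).
  { rewrite (RInt_minus (V := R_CompleteNormedModule)); auto. }
  rewrite Hm.
  eapply Rle_lt_trans.
  - apply abs_RInt_le_const; auto. apply (ex_RInt_minus (V := R_CompleteNormedModule)); auto.
  - unfold e. destruct eps as [ep Hep]; simpl.
    apply Rmult_lt_reg_r with (2 * (B - A) + 2); [lra|].
    field_simplify; [|lra]. nra.
Qed.

Lemma between_abs a b c : Rmin a b <= c <= Rmax a b -> Rabs (c - a) <= Rabs (b - a).
Proof.
  intros [H1 H2]. unfold Rmin, Rmax in *. destruct (Rle_dec a b).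
  - rewrite !Rabs_right; lra.
  - rewrite !Rabs_left1; lra.
Qed.

Lemma mvt1 (g dg : R -> R) a b :
  (forall c, Rmin a b <= c <= Rmax a b -> derivable_pt_lim g c (dg c)) ->
  exists c, Rmin a b <= c <= Rmax a b /\ g b - g a = dg c * (b - a).
Proof.
  intros H. destruct (MVT_gen g a b dg) as [c [Hc He]].
  - intros x Hx. apply is_derive_Reals. apply H. lra.
  - intros x Hx. apply derivable_continuous_pt. exists (dg x). apply H. exact Hx.
  - exists c. split; auto.
Qed.

Lemma mvt3 f d1 d2 d3 (p q : pt) : has_partials f d1 d2 d3 -> inH3 p -> inH3 q ->
  exists c1 c2 c3, Rabs (c1 - px p) <= Rabs (px q - px p) /\
    Rabs (c2 - py p) <= Rabs (py q - py p) /\ Rabs (c3 - pz p) <= Rabs (pz q - pz p) /\ 0 < c3 /\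
    f q - f p = d1 (c1, py q, pz q) * (px q - px p) + d2 (px p, c2, pz q) * (py q - py p)
                + d3 (px p, py p, c3) * (pz q - pz p).
Proof.
  intros H Hp Hq. destruct p as [[p1 p2] p3], q as [[q1 q2] q3].
  unfold inH3, px, py, pz in *; simpl in *.
  destruct (mvt1 (fun t => f (t, q2, q3)) (fun t => d1 (t, q2, q3)) p1 q1) as [c1 [Hc1 E1]].
  { intros c _. exact (proj1 (H (c, q2, q3) Hq)). }
  destruct (mvt1 (fun t => f (p1, t, q3)) (fun t => d2 (p1, t, q3)) p2 q2) as [c2 [Hc2 E2]].
  { intros c _. exact (proj1 (proj2 (H (p1, c, q3) Hq))). }
  destruct (mvt1 (fun t => f (p1, p2, t)) (fun t => d3 (p1, p2, t)) p3 q3) as [c3 [Hc3 E3]].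
  { intros c Hc. assert (0 < c) by (unfold Rmin, Rmax in Hc; destruct Rle_dec; lra).
    exact (proj2 (proj2 (H (p1, p2, c) H0))). }
  exists c1, c2, c3. repeat split; try (apply between_abs; assumption).
  - unfold Rmin, Rmax in Hc3; destruct Rle_dec; lra.
  - simpl in *. lra.
Qed.

Lemma partials_bcont f d1 d2 d3 : has_partials f d1 d2 d3 -> bcontH3 d1 -> bcontH3 d2 -> bcontH3 d3 -> bcontH3 f.
Proof.
  intros Hp Hc1 Hc2 Hc3.
  intros p Hpp eps He.
  destruct (Hc1 p Hpp 1 Rlt_0_1) as [e1 [He1 H1]].
  destruct (Hc2 p Hpp 1 Rlt_0_1) as [e2 [He2 H2]].
  destruct (Hc3 p Hpp 1 Rlt_0_1) as [e3 [He3 H3]].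
  set (K := Rabs (d1 p) + Rabs (d2 p) + Rabs (d3 p) + 3).
  assert (HK : 3 <= K) by (unfold K; assert (h1:=Rabs_pos (d1 p)); assert (h2:=Rabs_pos (d2 p)); assert (h3:=Rabs_pos (d3 p)); lra).
  exists (Rmin (Rmin e1 e2) (Rmin e3 (eps / (2*K)))).
  assert (0 < eps / (2*K)) by (apply Rdiv_lt_0_compat; lra).
  split. { repeat apply Rmin_pos; lra. }
  intros q Hq Q1 Q2 Q3.
  assert (m1 := Rmin_l (Rmin e1 e2) (Rmin e3 (eps / (2*K)))).
  assert (m2 := Rmin_r (Rmin e1 e2) (Rmin e3 (eps / (2*K)))).
  assert (m3 := Rmin_l e1 e2). assert (m4 := Rmin_r e1 e2).
  assert (m5 := Rmin_l e3 (eps/(2*K))). assert (m6 := Rmin_r e3 (eps/(2*K))).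
  set (dl := Rmin (Rmin e1 e2) (Rmin e3 (eps / (2*K)))) in *.
  destruct (mvt3 f d1 d2 d3 p q Hp Hpp Hq) as [c1 [c2 [c3 [A1 [A2 [A3 [A4 E]]]]]]].
  rewrite E.
  assert (B1 : Rabs (d1 (c1, py q, pz q)) <= Rabs (d1 p) + 1).
  { assert (Rabs (d1 (c1, py q, pz q) - d1 p) < 1).
    { apply H1; unfold inH3, px, py, pz in *; simpl; auto; lra. }
    assert (h := Rabs_triang_inv (d1 (c1, py q, pz q)) (d1 p)). lra. }
  assert (B2 : Rabs (d2 (px p, c2, pz q)) <= Rabs (d2 p) + 1).
  { assert (Rabs (d2 (px p, c2, pz q) - d2 p) < 1).
    { apply H2; unfold inH3, px, py, pz in *; simpl; auto; try lra.
      rewrite Rminus_diag, Rabs_R0; lra. }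
    assert (h := Rabs_triang_inv (d2 (px p, c2, pz q)) (d2 p)). lra. }
  assert (B3 : Rabs (d3 (px p, py p, c3)) <= Rabs (d3 p) + 1).
  { assert (Rabs (d3 (px p, py p, c3) - d3 p) < 1).
    { apply H3; unfold inH3, px, py, pz in *; simpl; auto; try lra;
      rewrite Rminus_diag, Rabs_R0; lra. }
    assert (h := Rabs_triang_inv (d3 (px p, py p, c3)) (d3 p)). lra. }
  eapply Rle_lt_trans. { apply Rabs_triang. }
  eapply Rle_lt_trans. { apply Rplus_le_compat_r. apply Rabs_triang. }
  rewrite !Rabs_mult.
  assert (X1 : Rabs (d1 (c1, py q, pz q)) * Rabs (px q - px p) <= (Rabs (d1 p) + 1) * (eps/(2*K))).
  { apply Rmult_le_compat; try apply Rabs_pos; lra. }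
  assert (X2 : Rabs (d2 (px p, c2, pz q)) * Rabs (py q - py p) <= (Rabs (d2 p) + 1) * (eps/(2*K))).
  { apply Rmult_le_compat; try apply Rabs_pos; lra. }
  assert (X3 : Rabs (d3 (px p, py p, c3)) * Rabs (pz q - pz p) <= (Rabs (d3 p) + 1) * (eps/(2*K))).
  { apply Rmult_le_compat; try apply Rabs_pos; lra. }
  assert (X4 : (Rabs (d1 p) + 1) * (eps/(2*K)) + (Rabs (d2 p) + 1) * (eps/(2*K)) + (Rabs (d3 p) + 1) * (eps/(2*K)) = eps / 2).
  { assert (HK' : K <> 0) by lra. unfold K in *. field. exact HK'. }
  lra.
Qed.

Lemma C1_bcont f : C1_H3 f -> bcontH3 f.
Proof.
  intros [d1 [d2 [d3 [Hp [Hc1 [Hc2 Hc3]]]]]].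
  apply (partials_bcont f d1 d2 d3 Hp); apply cont_H3_bcont; auto.
Qed.

Lemma Rabs_sum6 a b c d e f : Rabs (a + b + c + d + e + f) <= Rabs a + Rabs b + Rabs c + Rabs d + Rabs e + Rabs f.
Proof.
  repeat (eapply Rle_trans; [apply Rabs_triang| apply Rplus_le_compat_r]). apply Rle_refl.
Qed.

Lemma chain3 f d1 d2 d3 g1 g2 g3 l1 l2 l3 t0 :
  has_partials f d1 d2 d3 -> bcontH3 d1 -> bcontH3 d2 -> bcontH3 d3 ->
  derivable_pt_lim g1 t0 l1 -> derivable_pt_lim g2 t0 l2 -> derivable_pt_lim g3 t0 l3 ->
  0 < g3 t0 ->
  derivable_pt_lim (fun t => f (g1 t, g2 t, g3 t)) t0
    (d1 (g1 t0, g2 t0, g3 t0) * l1 + d2 (g1 t0, g2 t0, g3 t0) * l2 + d3 (g1 t0, g2 t0, g3 t0) * l3).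
Proof.
  intros Hp Hc1 Hc2 Hc3 G1 G2 G3 Hz.
  set (P := (g1 t0, g2 t0, g3 t0)).
  assert (HP : inH3 P) by exact Hz.
  intros eps Heps.
  set (Bd := 1 + Rabs (d1 P) + Rabs (d2 P) + Rabs (d3 P)).
  set (Bg := 1 + Rabs l1 + Rabs l2 + Rabs l3).
  assert (HBd : 1 <= Bd) by (unfold Bd; assert (h1:=Rabs_pos (d1 P)); assert (h2:=Rabs_pos (d2 P)); assert (h3:=Rabs_pos (d3 P)); lra).
  assert (HBg : 1 <= Bg) by (unfold Bg; assert (h1:=Rabs_pos l1); assert (h2:=Rabs_pos l2); assert (h3:=Rabs_pos l3); lra).
  set (e1 := eps / (6 * Bg)).
  assert (He1 : 0 < e1) by (unfold e1; apply Rdiv_lt_0_compat; lra).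
  destruct (Hc1 P HP e1 He1) as [dd1 [Hdd1 D1]].
  destruct (Hc2 P HP e1 He1) as [dd2 [Hdd2 D2]].
  destruct (Hc3 P HP e1 He1) as [dd3 [Hdd3 D3]].
  set (e2 := Rmin 1 (eps / (6 * Bd))).
  assert (He2 : 0 < e2) by (unfold e2; apply Rmin_pos; [lra| apply Rdiv_lt_0_compat; lra]).
  assert (He2a := Rmin_l 1 (eps / (6 * Bd))). assert (He2b := Rmin_r 1 (eps / (6 * Bd))).
  fold e2 in He2a, He2b.
  destruct (G1 e2 He2) as [dg1 Dg1].
  destruct (G2 e2 He2) as [dg2 Dg2].
  destruct (G3 e2 He2) as [dg3 Dg3].
  set (dd := Rmin dd1 (Rmin dd2 dd3)).
  assert (Hdd : 0 < dd) by (unfold dd; repeat apply Rmin_pos; lra).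
  assert (Hdda : dd <= dd1) by apply Rmin_l.
  assert (Hddb : dd <= dd2) by (eapply Rle_trans; [apply Rmin_r| apply Rmin_l]).
  assert (Hddc : dd <= dd3) by (eapply Rle_trans; [apply Rmin_r| apply Rmin_r]).
  set (del := Rmin (Rmin dg1 (Rmin dg2 dg3)) (Rmin (dd / Bg) (g3 t0 / (2 * Bg)))).
  assert (Hdel : 0 < del).
  { unfold del. repeat apply Rmin_pos; try apply cond_pos; apply Rdiv_lt_0_compat; lra. }
  exists (mkposreal del Hdel). intros h Hh0 Hh. simpl in Hh.
  assert (Ha1 : Rabs h < dg1) by (eapply Rlt_le_trans; [exact Hh| unfold del; eapply Rle_trans; [apply Rmin_l| apply Rmin_l]]).
  assert (Ha2 : Rabs h < dg2) by (eapply Rlt_le_trans; [exact Hh| unfold del; eapply Rle_trans; [apply Rmin_l| eapply Rle_trans; [apply Rmin_r| apply Rmin_l]]]).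
  assert (Ha3 : Rabs h < dg3) by (eapply Rlt_le_trans; [exact Hh| unfold del; eapply Rle_trans; [apply Rmin_l| eapply Rle_trans; [apply Rmin_r| apply Rmin_r]]]).
  assert (Ha4 : Rabs h < dd / Bg) by (eapply Rlt_le_trans; [exact Hh| unfold del; eapply Rle_trans; [apply Rmin_r| apply Rmin_l]]).
  assert (Ha5 : Rabs h < g3 t0 / (2 * Bg)) by (eapply Rlt_le_trans; [exact Hh| unfold del; eapply Rle_trans; [apply Rmin_r| apply Rmin_r]]).
  specialize (Dg1 h Hh0 Ha1). specialize (Dg2 h Hh0 Ha2). specialize (Dg3 h Hh0 Ha3).
  set (q1 := (g1 (t0 + h) - g1 t0) / h) in *.
  set (q2 := (g2 (t0 + h) - g2 t0) / h) in *.
  set (q3 := (g3 (t0 + h) - g3 t0) / h) in *.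
  assert (Hq1 : Rabs q1 <= Bg).
  { assert (h1 := Rabs_triang_inv q1 l1). unfold Bg. assert (h2:=Rabs_pos l2); assert (h3:=Rabs_pos l3). lra. }
  assert (Hq2 : Rabs q2 <= Bg).
  { assert (h1 := Rabs_triang_inv q2 l2). unfold Bg. assert (h2:=Rabs_pos l1); assert (h3:=Rabs_pos l3). lra. }
  assert (Hq3 : Rabs q3 <= Bg).
  { assert (h1 := Rabs_triang_inv q3 l3). unfold Bg. assert (h2:=Rabs_pos l2); assert (h3:=Rabs_pos l1). lra. }
  assert (HD : forall gi qi, qi = (gi (t0 + h) - gi t0) / h -> Rabs qi <= Bg -> Rabs (gi (t0 + h) - gi t0) < Rmin dd (g3 t0 / 2)).
  { intros gi qi Hqi Hb. replace (gi (t0 + h) - gi t0) with (qi * h) by (rewrite Hqi; field; exact Hh0).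
    rewrite Rabs_mult. apply Rmin_glb_lt.
    - apply Rle_lt_trans with (Bg * Rabs h). { apply Rmult_le_compat_r; [apply Rabs_pos| exact Hb]. }
      apply Rmult_lt_reg_l with (/ Bg). { apply Rinv_0_lt_compat; lra. }
      rewrite <- Rmult_assoc, Rinv_l by lra. rewrite Rmult_1_l. unfold Rdiv in Ha4. lra.
    - apply Rle_lt_trans with (Bg * Rabs h). { apply Rmult_le_compat_r; [apply Rabs_pos| exact Hb]. }
      apply Rmult_lt_reg_l with (/ Bg). { apply Rinv_0_lt_compat; lra. }
      rewrite <- Rmult_assoc, Rinv_l by lra. rewrite Rmult_1_l.
      replace (/ Bg * (g3 t0 / 2)) with (g3 t0 / (2 * Bg)) by (field; lra). exact Ha5. }
  assert (E1 := HD g1 q1 eq_refl Hq1). assert (E2 := HD g2 q2 eq_refl Hq2). assert (E3 := HD g3 q3 eq_refl Hq3).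
  assert (m1 := Rmin_l dd (g3 t0 / 2)). assert (m2 := Rmin_r dd (g3 t0 / 2)).
  set (Q := (g1 (t0 + h), g2 (t0 + h), g3 (t0 + h))).
  assert (HQ : inH3 Q).
  { unfold Q, inH3, pz; simpl. apply Rabs_def2 in E3. lra. }
  destruct (mvt3 f d1 d2 d3 P Q Hp HP HQ) as [c1 [c2 [c3 [A1 [A2 [A3 [A4 E]]]]]]].
  unfold P, Q, px, py, pz in A1, A2, A3, E; simpl in A1, A2, A3, E.
  cbv beta. unfold Q, P. rewrite E. fold P.
  set (X1 := d1 (c1, g2 (t0 + h), g3 (t0 + h))).
  set (X2 := d2 (g1 t0, c2, g3 (t0 + h))).
  set (X3 := d3 (g1 t0, g2 t0, c3)).
  assert (Id : (X1 * (g1 (t0 + h) - g1 t0) + X2 * (g2 (t0 + h) - g2 t0) + X3 * (g3 (t0 + h) - g3 t0)) / h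
     - (d1 P * l1 + d2 P * l2 + d3 P * l3)
     = (X1 - d1 P) * q1 + (X2 - d2 P) * q2 + (X3 - d3 P) * q3
       + d1 P * (q1 - l1) + d2 P * (q2 - l2) + d3 P * (q3 - l3)).
  { unfold q1, q2, q3. field. exact Hh0. }
  rewrite Id. eapply Rle_lt_trans; [apply Rabs_sum6|]. rewrite !Rabs_mult.
  assert (F1 : Rabs (X1 - d1 P) < e1).
  { unfold X1. apply D1; unfold inH3, P, px, py, pz; simpl; try lra. apply Rabs_def2 in E3. lra. }
  assert (F2 : Rabs (X2 - d2 P) < e1).
  { unfold X2. apply D2; unfold inH3, P, px, py, pz; simpl; try lra.
    - apply Rabs_def2 in E3. lra.
    - rewrite Rminus_diag, Rabs_R0; lra. }
  assert (F3 : Rabs (X3 - d3 P) < e1).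
  { unfold X3. apply D3; unfold inH3, P, px, py, pz; simpl; try lra; rewrite Rminus_diag, Rabs_R0; lra. }
  assert (U1 : Rabs (X1 - d1 P) * Rabs q1 <= e1 * Bg) by (apply Rmult_le_compat; try apply Rabs_pos; lra).
  assert (U2 : Rabs (X2 - d2 P) * Rabs q2 <= e1 * Bg) by (apply Rmult_le_compat; try apply Rabs_pos; lra).
  assert (U3 : Rabs (X3 - d3 P) * Rabs q3 <= e1 * Bg) by (apply Rmult_le_compat; try apply Rabs_pos; lra).
  assert (Bd1 : Rabs (d1 P) <= Bd) by (unfold Bd; assert (h2:=Rabs_pos (d2 P)); assert (h3:=Rabs_pos (d3 P)); lra).
  assert (Bd2 : Rabs (d2 P) <= Bd) by (unfold Bd; assert (h2:=Rabs_pos (d1 P)); assert (h3:=Rabs_pos (d3 P)); lra).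
  assert (Bd3 : Rabs (d3 P) <= Bd) by (unfold Bd; assert (h2:=Rabs_pos (d2 P)); assert (h3:=Rabs_pos (d1 P)); lra).
  assert (V1 : Rabs (d1 P) * Rabs (q1 - l1) <= Bd * (eps / (6 * Bd))) by (apply Rmult_le_compat; try apply Rabs_pos; lra).
  assert (V2 : Rabs (d2 P) * Rabs (q2 - l2) <= Bd * (eps / (6 * Bd))) by (apply Rmult_le_compat; try apply Rabs_pos; lra).
  assert (V3 : Rabs (d3 P) * Rabs (q3 - l3) <= Bd * (eps / (6 * Bd))) by (apply Rmult_le_compat; try apply Rabs_pos; lra).
  assert (W1 : e1 * Bg = eps / 6) by (unfold e1; field; lra).
  assert (W2 : Bd * (eps / (6 * Bd)) = eps / 6) by (field; lra).
  assert (U1' : Rabs (X1 - d1 P) * Rabs q1 < eps / 6).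
  { destruct (Req_dec (Rabs q1) 0) as [Z|Z]. { rewrite Z, Rmult_0_r. lra. }
    assert (0 < Rabs q1) by (assert (hq:=Rabs_pos q1); lra).
    apply Rle_lt_trans with (Rabs (X1 - d1 P) * Bg). { apply Rmult_le_compat_l; [apply Rabs_pos| lra]. }
    rewrite <- W1. apply Rmult_lt_compat_r; lra. }
  lra.
Qed.

Definition in_box (lo hi p : pt) := px lo <= px p <= px hi /\ py lo <= py p <= py hi /\ pz lo <= pz p <= pz hi.

Lemma fold_max_ge {T : Type} (F : T -> R) (l : list T) t :
  List.In t l -> F t <= List.fold_right (fun t m => Rmax (F t) m) 0 l.
Proof.
  induction l as [|a l IH]; simpl; [tauto|]. intros [<-|Hi].
  - apply Rmax_l.
  - eapply Rle_trans; [apply IH; exact Hi| apply Rmax_r].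
Qed.

Lemma box_bound (h : pt -> R) lo hi : 0 < pz lo ->
  (forall p, in_box lo hi p -> bcont h p) -> exists M, forall p, in_box lo hi p -> Rabs (h p) <= M.
Proof.
  intros Hlo Hc.
  set (tp := fun t : Compactness.Tn 3 R => match t with (a, (b, (c, _))) => (a, b, c) end : pt).
  set (tn := fun p : pt => (px p, (py p, (pz p, tt))) : Compactness.Tn 3 R).
  assert (Hd : forall t : Compactness.Tn 3 R, exists d : posreal, in_box lo hi (tp t) ->
     forall q, inH3 q -> Rabs (px q - px (tp t)) < d -> Rabs (py q - py (tp t)) < d ->
     Rabs (pz q - pz (tp t)) < d -> Rabs (h q - h (tp t)) < 1).
  { intros t. destruct (classic (in_box lo hi (tp t))) as [Hb|Hb].
    - destruct (Hc _ Hb 1 Rlt_0_1) as [d [Hd Hq]]. exists (mkposreal d Hd). intros _. exact Hq.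
    - exists (mkposreal 1 Rlt_0_1). intros Hb'; contradiction. }
  set (delta := fun t => proj1_sig (constructive_indefinite_description _ (Hd t))).
  assert (Hdelta : forall t, in_box lo hi (tp t) ->
     forall q, inH3 q -> Rabs (px q - px (tp t)) < delta t -> Rabs (py q - py (tp t)) < delta t ->
     Rabs (pz q - pz (tp t)) < delta t -> Rabs (h q - h (tp t)) < 1).
  { intros t. unfold delta. destruct (constructive_indefinite_description _ (Hd t)). simpl. auto. }
  apply NNPP. intros Hn. apply (compactness_list 3 (tn lo) (tn hi) delta). intros [l Hl]. apply Hn.
  exists (List.fold_right (fun t m => Rmax (Rabs (h (tp t)) + 1) m) 0 l).
  intros p Hp. destruct (Hl (tn p)) as [t [Hin [Hbt Hct]]].
  { unfold tn, in_box in *; simpl. tauto. }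
  assert (Hge := fold_max_ge (fun t => Rabs (h (tp t)) + 1) l t Hin). cbv beta in Hge.
  assert (Hbt' : in_box lo hi (tp t)).
  { destruct t as [a [b [c u]]]. unfold tn, in_box, tp in *; simpl in *. tauto. }
  assert (Hq : Rabs (h p - h (tp t)) < 1).
  { apply Hdelta; auto.
    - unfold inH3; unfold in_box in Hp; lra.
    - destruct t as [a [b [c u]]]; unfold tn, tp in *; simpl in *; tauto.
    - destruct t as [a [b [c u]]]; unfold tn, tp in *; simpl in *; tauto.
    - destruct t as [a [b [c u]]]; unfold tn, tp in *; simpl in *; tauto. }
  assert (hh := Rabs_triang_inv (h p) (h (tp t))). lra.
Qed.

Lemma cR_const {U : UniformSpace} (k : R) (x : U) : continuous (fun _ : U => k) x.
Proof. apply continuous_const. Qed.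
Lemma cR_plus {U : UniformSpace} (f g : U -> R) x : continuous f x -> continuous g x -> continuous (fun y => f y + g y) x.
Proof. intros; apply (continuous_plus f g); auto. Qed.
Lemma cR_opp {U : UniformSpace} (f : U -> R) x : continuous f x -> continuous (fun y => - f y) x.
Proof. intros; apply (continuous_opp f); auto. Qed.
Lemma cR_minus {U : UniformSpace} (f g : U -> R) x : continuous f x -> continuous g x -> continuous (fun y => f y - g y) x.
Proof. intros; unfold Rminus; apply cR_plus; auto; apply cR_opp; auto. Qed.
Lemma cR_mult {U : UniformSpace} (f g : U -> R) x : continuous f x -> continuous g x -> continuous (fun y => f y * g y) x.
Proof. intros; apply (continuous_mult f g); auto. Qed.
Lemma cR_comp1 {U : UniformSpace} (F : R -> R) (f : U -> R) x : continuous f x -> continuous F (f x) -> continuous (fun y => F (f y)) x.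
Proof. intros; apply (continuous_comp f F); auto. Qed.
Lemma cR_inv {U : UniformSpace} (f : U -> R) x : continuous f x -> f x <> 0 -> continuous (fun y => / f y) x.
Proof.
  intros H1 H2. apply (cR_comp1 Rinv f x H1).
  apply (continuous_Rinv_comp (fun y => y)); auto. apply continuous_id.
Qed.
Lemma cR_div {U : UniformSpace} (f g : U -> R) x : continuous f x -> continuous g x -> g x <> 0 -> continuous (fun y => f y / g y) x.
Proof. intros; unfold Rdiv; apply cR_mult; auto; apply cR_inv; auto. Qed.
Lemma cR_sqrt {U : UniformSpace} (f : U -> R) x : continuous f x -> continuous (fun y => sqrt (f y)) x.
Proof. intros; apply cR_comp1; auto; apply continuous_sqrt. Qed.
Lemma cR_cos {U : UniformSpace} (f : U -> R) x : continuous f x -> continuous (fun y => cos (f y)) x.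
Proof. intros; apply cR_comp1; auto; apply continuous_cos. Qed.
Lemma cR_sin {U : UniformSpace} (f : U -> R) x : continuous f x -> continuous (fun y => sin (f y)) x.
Proof. intros; apply cR_comp1; auto; apply continuous_sin. Qed.
Lemma cR_pow {U : UniformSpace} (f : U -> R) n x : continuous f x -> continuous (fun y => f y ^ n) x.
Proof. intros H. induction n; simpl. apply cR_const. apply cR_mult; auto. Qed.

Lemma cR_exp (x : R) : continuous exp x.
Proof. apply continuous_exp. Qed.
Lemma cR_cosh (x : R) : continuous cosh x.
Proof. apply continuity_pt_filterlim. apply derivable_continuous_pt. exists (sinh x). apply derivable_pt_lim_cosh. Qed.
Lemma cR_sinh (x : R) : continuous sinh x.
Proof. apply continuity_pt_filterlim. apply derivable_continuous_pt. exists (cosh x). apply derivable_pt_lim_sinh. Qed.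

Lemma cR_fst {A B : UniformSpace} (q : A * B) : continuous (fun y : A * B => fst y) q.
Proof. destruct q; apply continuous_fst. Qed.
Lemma cR_snd {A B : UniformSpace} (q : A * B) : continuous (fun y : A * B => snd y) q.
Proof. destruct q; apply continuous_snd. Qed.
Lemma cR_fstc {U A B : UniformSpace} (f : U -> A * B) x : continuous f x -> continuous (fun y => fst (f y)) x.
Proof. intros; apply (continuous_comp f fst); auto. apply cR_fst. Qed.
Lemma cR_sndc {U A B : UniformSpace} (f : U -> A * B) x : continuous f x -> continuous (fun y => snd (f y)) x.
Proof. intros; apply (continuous_comp f snd); auto. apply cR_snd. Qed.



Lemma cosh_sinh_sq r : cosh r ^ 2 - sinh r ^ 2 = 1.
Proof.
  unfold cosh, sinh. assert (H := exp_plus r (-r)). rewrite Rplus_opp_r, exp_0 in H.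
  replace ((exp r + exp (- r)) / 2) with ((exp r + exp (- r)) / 2) by reflexivity.
  nra.
Qed.
Lemma sinh_pos r : 0 < r -> 0 < sinh r.
Proof.
  intros H. unfold sinh. assert (exp (-r) < exp r) by (apply exp_increasing; lra). lra.
Qed.
Lemma cosh_pos r : 0 < cosh r.
Proof. unfold cosh. assert (0 < exp r) by apply exp_pos. assert (0 < exp (-r)) by apply exp_pos. lra. Qed.
Lemma cosh_gt_sinh r : sinh r < cosh r.
Proof. unfold cosh, sinh. assert (0 < exp (-r)) by apply exp_pos. lra. Qed.
Lemma cosh_sinh_exp r : cosh r + sinh r = exp r.
Proof. unfold cosh, sinh. field. Qed.
Lemma cosh_minus_sinh r : cosh r - sinh r = exp (- r).
Proof. unfold cosh, sinh. field. Qed.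
Lemma cosh_minus_sinh_cos r a : 0 < cosh r - sinh r * cos a.
Proof.
  destruct (Rle_dec 0 (sinh r)).
  - assert (cos a <= 1) by apply COS_bound. assert (sinh r * cos a <= sinh r) by nra.
    assert (h := cosh_gt_sinh r). lra.
  - assert (-1 <= cos a) by apply COS_bound. assert (sinh r * cos a <= - sinh r) by nra.
    rewrite <- (Rminus_0_r (cosh r)). assert (h := cosh_pos r). 
    assert (cosh r + sinh r > 0) by (rewrite cosh_sinh_exp; apply exp_pos). lra.
Qed.

Ltac cont_step :=
  lazymatch goal with
  | |- continuous (fun _ => ?c) _ => apply cR_const
  | |- continuous (fun y => y) _ => apply continuous_id
  | |- continuous (fun _ => _ + _) _ => apply cR_plus
  | |- continuous (fun _ => _ - _) _ => apply cR_minus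
  | |- continuous (fun _ => _ * _) _ => apply cR_mult
  | |- continuous (fun _ => - _) _ => apply cR_opp
  | |- continuous (fun _ => sqrt _) _ => apply cR_sqrt
  | |- continuous (fun _ => cos _) _ => apply cR_cos
  | |- continuous (fun _ => sin _) _ => apply cR_sin
  | |- continuous (fun _ => _ ^ _) _ => apply cR_pow
  | |- continuous (fun _ => cosh _) _ => apply (cR_comp1 cosh); [|apply cR_cosh]
  | |- continuous (fun _ => sinh _) _ => apply (cR_comp1 sinh); [|apply cR_sinh]
  | |- continuous (fun _ => exp _) _ => apply (cR_comp1 exp); [|apply cR_exp]
  | |- continuous fst _ => apply cR_fst
  | |- continuous snd _ => apply cR_snd
  | |- continuous (fun y => fst y) _ => apply cR_fst
  | |- continuous (fun y => snd y) _ => apply cR_snd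
  | |- continuous (fun _ => fst _) _ => apply cR_fstc
  | |- continuous (fun _ => snd _) _ => apply cR_sndc
  | |- continuous (fun _ => _ / _) _ => apply cR_div; [ | | cbn [fst snd]; try (apply Rgt_not_eq; apply cosh_minus_sinh_cos) ]
  | |- continuous (Rmult ?a) _ => apply (cR_mult (fun _ => a) (fun y => y)); [apply cR_const| apply continuous_id]
  | |- continuous (Rplus ?a) _ => apply (cR_plus (fun _ => a) (fun y => y)); [apply cR_const| apply continuous_id]
  | |- continuous (Rminus ?a) _ => apply (cR_minus (fun _ => a) (fun y => y)); [apply cR_const| apply continuous_id]
  | |- continuous sin _ => apply continuous_sin
  | |- continuous cos _ => apply continuous_cos
  | |- continuous sqrt _ => apply continuous_sqrt
  | |- continuous exp _ => apply continuous_exp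
  | |- continuous cosh _ => apply cR_cosh
  | |- continuous sinh _ => apply cR_sinh
  end.
Ltac cont := repeat cont_step.

Lemma chs_pos r k : -1 <= k <= 1 -> 0 < cosh r + sinh r * k.
Proof.
  intros Hk. destruct (Rle_dec 0 (sinh r)).
  - assert (- sinh r <= sinh r * k) by nra. assert (h := cosh_gt_sinh r). lra.
  - assert (sinh r <= sinh r * k) by nra.
    assert (cosh r + sinh r > 0) by (rewrite cosh_sinh_exp; apply exp_pos). lra.
Qed.

Lemma loc_pos (g : R -> R) u0 : continuous g u0 -> 0 < g u0 -> locally u0 (fun u => 0 < g u).
Proof.
  intros Hc Hp. assert (H2 : 0 < g u0 / 2) by (apply Rdiv_lt_0_compat; lra).
  apply cont_ballR with (eps := mkposreal _ H2) in Hc. revert Hc. apply filter_imp.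
  intros u Hu. simpl in Hu. apply Rabs_def2 in Hu. lra.
Qed.

Definition Yf (x : pt) r a := pz x / (cosh r - sinh r * cos a).
Definition Epar (x : pt) r a ph : pt :=
  (px x + Yf x r a * sinh r * sin a * cos ph, py x + Yf x r a * sinh r * sin a * sin ph, Yf x r a).
Definition Jint (h : pt -> R) x r a : R := RInt (fun ph => h (Epar x r a ph)) 0 (2*PI).
Definition FnE (h : pt -> R) x r : R := RInt (fun a => sin a * Jint h x r a) 0 PI.

Definition phat (x : pt) r u ph : pt :=
  (px x + pz x * sinh r * sqrt (1 - u^2) * cos ph, py x + pz x * sinh r * sqrt (1 - u^2) * sin ph,
   pz x * cosh r + pz x * sinh r * u).
Definition Phat (x : pt) r v ph : pt :=
  (px x + (pz x / (cosh r - sinh r * v)) * sinh r * sqrt (1 - v^2) * cos ph,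
   py x + (pz x / (cosh r - sinh r * v)) * sinh r * sqrt (1 - v^2) * sin ph,
   pz x / (cosh r - sinh r * v)).

Lemma Yf_pos x r a : inH3 x -> 0 < Yf x r a.
Proof. intros H; unfold Yf; apply Rdiv_lt_0_compat; [exact H| apply cosh_minus_sinh_cos]. Qed.

Lemma cont_Epar h x r a ph : bcontH3 h -> inH3 x ->
  continuous (fun q : R * R => h (Epar x r (fst q) (snd q))) (a, ph).
Proof.
  intros Hh Hx. unfold Epar, Yf. apply comp_cont; auto; try cont.
  simpl. apply Rdiv_lt_0_compat; [exact Hx| apply cosh_minus_sinh_cos].
Qed.

Lemma cont_sphere h x r th ph : bcontH3 h -> inH3 x ->
  continuous (fun q : R * R => h (sphere_pt x r (fst q) (snd q))) (th, ph).
Proof.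
  intros Hh Hx. unfold sphere_pt. apply comp_cont; auto.
  - cont.
  - cont.
  - cont.
  - simpl. assert (0 < cosh r + sinh r * cos th) by (apply chs_pos; apply COS_bound).
    unfold inH3 in Hx. nra.
Qed.

Lemma cont_phat h x r u ph : bcontH3 h -> inH3 x -> 0 < cosh r + sinh r * u ->
  continuous (fun q : R * R => h (phat x r (fst q) (snd q))) (u, ph).
Proof.
  intros Hh Hx Hu. unfold phat. apply comp_cont; auto.
  - cont.
  - cont.
  - cont.
  - simpl. unfold inH3 in Hx. nra.
Qed.

Lemma cont_Phat h x r v ph : bcontH3 h -> inH3 x -> 0 < cosh r - sinh r * v ->
  continuous (fun q : R * R => h (Phat x r (fst q) (snd q))) (v, ph).
Proof.
  intros Hh Hx Hv. unfold Phat. apply comp_cont; auto; try cont; simpl; try lra.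
  apply Rdiv_lt_0_compat; auto.
Qed.


Definition JC (h' : R -> R -> R) y t := continuous (fun q : R * R => h' (fst q) (snd q)) (y, t).

Lemma cont_param_R (h' : R -> R -> R) A B x0 : A <= B ->
  locally x0 (fun y => forall t, A <= t <= B -> JC h' y t) ->
  continuous (fun y => RInt (h' y) A B) x0.
Proof.
  intros HAB Hl. apply (cont_param h'); auto.
  - intros t Ht. destruct Hl as [e He]. apply (He x0 (ball_center x0 e) t Ht).
  - revert Hl. apply filter_imp. intros y Hy t Ht. apply cont_slice. apply Hy; auto.
Qed.

Lemma ex_RInt_JC (h' : R -> R -> R) y A B : A <= B -> (forall t, A <= t <= B -> JC h' y t) -> ex_RInt (h' y) A B.
Proof.
  intros HAB H. apply ex_RInt_cont. intros t Ht. rewrite Rmin_left in Ht by lra.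
  rewrite Rmax_right in Ht by lra. apply cont_slice. apply H; auto.
Qed.

Lemma RInt_mult_const (g : R -> R) (k A B : R) : ex_RInt g A B ->
  RInt (fun t => g t * k) A B = k * RInt g A B.
Proof.
  intros H. rewrite <- (RInt_scal (V := R_CompleteNormedModule)) by exact H.
  apply RInt_ext. intros t _. unfold scal; simpl; unfold mult; simpl; ring.
Qed.

Lemma RInt_const_mult (g : R -> R) (k A B : R) : ex_RInt g A B ->
  RInt (fun t => k * g t) A B = k * RInt g A B.
Proof.
  intros H. rewrite <- (RInt_scal (V := R_CompleteNormedModule)) by exact H.
  apply RInt_ext. intros t _. reflexivity.
Qed.

Lemma twoPI_pos : 0 <= 2 * PI.
Proof. assert (h := PI_RGT_0). lra. Qed.

Lemma cont_I_sphere h x r th : bcontH3 h -> inH3 x ->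
  continuous (fun t => RInt (fun ph => h (sphere_pt x r t ph)) 0 (2*PI)) th.
Proof.
  intros Hh Hx. apply (cont_param_R (fun t ph => h (sphere_pt x r t ph))); [apply twoPI_pos|].
  apply filter_forall. intros y t _. apply cont_sphere; auto.
Qed.

Lemma S1 h x r : bcontH3 h -> inH3 x ->
  sphere_integral h x r = RInt (fun th => sphere_density r th * RInt (fun ph => h (sphere_pt x r th ph)) 0 (2*PI)) 0 PI.
Proof.
  intros Hh Hx. unfold sphere_integral.
  assert (Hex : forall th, ex_RInt (fun ph => h (sphere_pt x r th ph)) 0 (2*PI)).
  { intros th. apply (ex_RInt_JC (fun t ph => h (sphere_pt x r t ph))); [apply twoPI_pos|].
    intros t _. apply cont_sphere; auto. }
  assert (E : (fun th => Defs.RInt (fun ph => h (sphere_pt x r th ph) * sphere_density r th) 0 (2*PI)) =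
              (fun th => sphere_density r th * RInt (fun ph => h (sphere_pt x r th ph)) 0 (2*PI))).
  { apply functional_extensionality; intros th. rewrite DRInt_eq.
    - apply RInt_mult_const. apply Hex.
    - apply ex_RInt_cont. intros t _. apply cR_mult.
      + apply (cont_slice (fun t ph => h (sphere_pt x r t ph))). apply cont_sphere; auto.
      + apply cR_const. }
  rewrite E. apply DRInt_eq. apply ex_RInt_cont. intros t _. apply cR_mult.
  - unfold sphere_density. cont. apply pow_nonzero. apply Rgt_not_eq. apply chs_pos, COS_bound.
  - apply cont_I_sphere; auto.
Qed.

Lemma sin_sqrt y : 0 <= y <= PI -> sqrt (1 - cos y ^ 2) = sin y.
Proof.
  intros Hy. replace (1 - cos y ^ 2) with (sin y ^ 2) by (rewrite <- (sin2_cos2 y); unfold Rsqr; ring).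
  apply sqrt_pow2. apply sin_ge_0; lra.
Qed.

Definition Ihat (h : pt -> R) x r u : R := RInt (fun ph => h (phat x r u ph)) 0 (2*PI).
Definition Kf (h : pt -> R) x r u : R := sinh r ^ 2 / (cosh r + sinh r * u) ^ 2 * Ihat h x r u.
Definition Jhat (h : pt -> R) x r v : R := RInt (fun ph => h (Phat x r v ph)) 0 (2*PI).

Lemma cont_Ihat h x r u : bcontH3 h -> inH3 x -> 0 < cosh r + sinh r * u ->
  continuous (Ihat h x r) u.
Proof.
  intros Hh Hx Hu. apply (cont_param_R (fun u ph => h (phat x r u ph))); [apply twoPI_pos|].
  assert (Hl := loc_pos (fun u => cosh r + sinh r * u) u). cbv beta in Hl.
  assert (Hc : continuous (fun u => cosh r + sinh r * u) u) by cont.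
  specialize (Hl Hc Hu). revert Hl. apply filter_imp. intros y Hy t _. apply cont_phat; auto.
Qed.

Lemma cont_Kf h x r u : bcontH3 h -> inH3 x -> 0 < cosh r + sinh r * u ->
  continuous (Kf h x r) u.
Proof.
  intros Hh Hx Hu. unfold Kf. apply (cR_mult (fun u => sinh r ^ 2 / (cosh r + sinh r * u) ^ 2) (Ihat h x r)).
  - cont. apply pow_nonzero. lra.
  - apply cont_Ihat; auto.
Qed.

Lemma cont_Jhat h x r v : bcontH3 h -> inH3 x -> 0 < cosh r - sinh r * v ->
  continuous (Jhat h x r) v.
Proof.
  intros Hh Hx Hu. apply (cont_param_R (fun v ph => h (Phat x r v ph))); [apply twoPI_pos|].
  assert (Hl := loc_pos (fun v => cosh r - sinh r * v) v). cbv beta in Hl.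
  assert (Hc : continuous (fun v => cosh r - sinh r * v) v) by cont.
  specialize (Hl Hc Hu). revert Hl. apply filter_imp. intros y Hy t _. apply cont_Phat; auto.
Qed.

Lemma S2 h x r : bcontH3 h -> inH3 x ->
  RInt (fun th => sphere_density r th * RInt (fun ph => h (sphere_pt x r th ph)) 0 (2*PI)) 0 PI
  = RInt (Kf h x r) (-1) 1.
Proof.
  intros Hh Hx.
  assert (HK : forall u, -1 <= u <= 1 -> continuous (Kf h x r) u).
  { intros u Hu. apply cont_Kf; auto. apply chs_pos; auto. }
  assert (H1 : forall y, Rmin 0 PI <= y <= Rmax 0 PI -> continuous (Kf h x r) (cos y)).
  { intros y _. apply HK. apply COS_bound. }
  assert (H2 : forall y, Rmin 0 PI <= y <= Rmax 0 PI -> is_derive cos y (- sin y) /\ continuous (fun y => - sin y) y).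
  { intros y _. split; [auto_derive; auto; ring| cont]. }
  assert (Hc := is_RInt_comp (V := R_CompleteNormedModule) (Kf h x r) cos (fun y => - sin y) 0 PI H1 H2).
  rewrite cos_0, cos_PI in Hc.
  assert (HexK : ex_RInt (Kf h x r) 1 (-1)).
  { apply ex_RInt_cont. intros t Ht. apply HK. unfold Rmin, Rmax in Ht; destruct Rle_dec; lra. }
  rewrite <- (opp_RInt_swap (Kf h x r) 1 (-1) HexK).
  rewrite <- (is_RInt_unique _ _ _ _ Hc).
  rewrite <- (RInt_opp (V := R_CompleteNormedModule)) by (eexists; exact Hc).
  apply RInt_ext. intros y Hy. rewrite Rmin_left in Hy by (assert (h0 := PI_RGT_0); lra).
  rewrite Rmax_right in Hy by (assert (h0 := PI_RGT_0); lra).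
  unfold opp, scal; simpl; unfold mult; simpl. unfold Kf, Ihat, sphere_density.
  assert (E : (fun ph => h (sphere_pt x r y ph)) = (fun ph => h (phat x r (cos y) ph))).
  { apply functional_extensionality. intros ph. unfold sphere_pt, phat.
    rewrite sin_sqrt by lra. reflexivity. }
  rewrite E. assert (0 < cosh r + sinh r * cos y) by (apply chs_pos, COS_bound).
  field. lra.
Qed.

Definition mob r v := (cosh r * v - sinh r) / (cosh r - sinh r * v).

Lemma chs_neg_pos r v : -1 <= v <= 1 -> 0 < cosh r - sinh r * v.
Proof. intros H. replace (cosh r - sinh r * v) with (cosh r + sinh r * (- v)) by ring. apply chs_pos; lra. Qed.

Lemma mob_range r v : -1 <= v <= 1 -> -1 <= mob r v <= 1.
Proof.
  intros Hv. assert (Hp := chs_neg_pos r v Hv). unfold mob.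
  assert (h1 : 0 < cosh r - sinh r) by (rewrite cosh_minus_sinh; apply exp_pos).
  assert (h2 : 0 < cosh r + sinh r) by (rewrite cosh_sinh_exp; apply exp_pos).
  split.
  - apply Rmult_le_reg_r with (cosh r - sinh r * v); auto. unfold Rdiv.
    rewrite Rmult_assoc, Rinv_l by lra. nra.
  - apply Rmult_le_reg_r with (cosh r - sinh r * v); auto. unfold Rdiv.
    rewrite Rmult_assoc, Rinv_l by lra. nra.
Qed.

Lemma mob_key r v : -1 <= v <= 1 -> cosh r + sinh r * mob r v = / (cosh r - sinh r * v).
Proof.
  intros Hv. assert (Hp := chs_neg_pos r v Hv). assert (Hcs := cosh_sinh_sq r). unfold mob.
  replace (cosh r + sinh r * ((cosh r * v - sinh r) / (cosh r - sinh r * v)))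
    with ((cosh r ^ 2 - sinh r ^ 2) / (cosh r - sinh r * v)) by (field; lra).
  rewrite Hcs. field. lra.
Qed.

Lemma phat_mob x r v ph : -1 <= v <= 1 -> phat x r (mob r v) ph = Phat x r v ph.
Proof.
  intros Hv. assert (Hp := chs_neg_pos r v Hv). assert (Hcs := cosh_sinh_sq r).
  assert (Hsq : sqrt (1 - mob r v ^ 2) = sqrt (1 - v ^ 2) / (cosh r - sinh r * v)).
  { assert (E : 1 - mob r v ^ 2 = (1 - v^2) / (cosh r - sinh r * v) ^ 2).
    { unfold mob. replace (1 - v^2) with ((cosh r ^ 2 - sinh r ^ 2) * (1 - v^2)) by (rewrite Hcs; ring).
      field. lra. }
    rewrite E. assert (0 <= 1 - v^2) by nra.
    rewrite sqrt_div_alt by (apply pow_lt; lra). rewrite sqrt_pow2 by lra. reflexivity. }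
  unfold phat, Phat. rewrite Hsq.
  assert (E3 : pz x * cosh r + pz x * sinh r * mob r v = pz x / (cosh r - sinh r * v)).
  { replace (pz x * cosh r + pz x * sinh r * mob r v) with (pz x * (cosh r + sinh r * mob r v)) by ring.
    rewrite mob_key by auto. field. lra. }
  rewrite E3.
  replace (pz x * sinh r * (sqrt (1 - v^2) / (cosh r - sinh r * v)))
    with (pz x / (cosh r - sinh r * v) * sinh r * sqrt (1 - v ^ 2)) by (field; lra).
  reflexivity.
Qed.

Lemma S3 h x r : bcontH3 h -> inH3 x ->
  RInt (Kf h x r) (-1) 1 = sinh r ^ 2 * RInt (Jhat h x r) (-1) 1.
Proof.
  intros Hh Hx.
  assert (HK : forall u, -1 <= u <= 1 -> continuous (Kf h x r) u).
  { intros u Hu. apply cont_Kf; auto. apply chs_pos; auto. }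
  assert (Hr : forall y, Rmin (-1) 1 <= y <= Rmax (-1) 1 -> -1 <= y <= 1).
  { intros y Hy. rewrite Rmin_left, Rmax_right in Hy by lra. exact Hy. }
  assert (H1 : forall y, Rmin (-1) 1 <= y <= Rmax (-1) 1 -> continuous (Kf h x r) (mob r y)).
  { intros y Hy. apply HK. apply mob_range. auto. }
  assert (H2 : forall y, Rmin (-1) 1 <= y <= Rmax (-1) 1 ->
     is_derive (mob r) y (/ (cosh r - sinh r * y) ^ 2) /\ continuous (fun y => / (cosh r - sinh r * y) ^ 2) y).
  { intros y Hy. apply Hr in Hy. assert (Hp := chs_neg_pos r y Hy). assert (Hcs := cosh_sinh_sq r). split.
    - unfold mob. auto_derive; [lra|].
      replace (/ (cosh r - sinh r * y) ^ 2) with ((cosh r ^ 2 - sinh r ^ 2) / (cosh r - sinh r * y) ^ 2)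
        by (rewrite Hcs; field; lra).
      field. lra.
    - apply cR_inv; [cont| apply pow_nonzero; lra]. }
  assert (Hc := RInt_comp (V := R_CompleteNormedModule) (Kf h x r) (mob r) _ (-1) 1 H1 H2).
  assert (Em1 : mob r (-1) = -1).
  { unfold mob. assert (0 < cosh r + sinh r) by (rewrite cosh_sinh_exp; apply exp_pos).
    replace (cosh r * -1 - sinh r) with (- (cosh r - sinh r * -1)) by ring. field. lra. }
  assert (Ep1 : mob r 1 = 1).
  { unfold mob. assert (0 < cosh r - sinh r) by (rewrite cosh_minus_sinh; apply exp_pos).
    replace (cosh r * 1 - sinh r) with (cosh r - sinh r * 1) by ring. field. lra. }
  rewrite Em1, Ep1 in Hc. rewrite <- Hc.
  rewrite <- RInt_const_mult.
  - apply RInt_ext. intros v Hv. rewrite Rmin_left, Rmax_right in Hv by lra.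
    unfold scal; simpl; unfold mult; simpl. unfold Kf. rewrite mob_key by lra.
    unfold Ihat, Jhat.
    assert (E : (fun ph => h (phat x r (mob r v) ph)) = (fun ph => h (Phat x r v ph))).
    { apply functional_extensionality; intros ph. rewrite phat_mob by lra. reflexivity. }
    rewrite E. assert (Hp := chs_neg_pos r v (conj (Rlt_le _ _ (proj1 Hv)) (Rlt_le _ _ (proj2 Hv)))).
    field. lra.
  - apply ex_RInt_cont. intros t Ht. apply cont_Jhat; auto. apply chs_neg_pos. apply Hr; exact Ht.
Qed.

Lemma cont_Jint h x r a : bcontH3 h -> inH3 x -> continuous (Jint h x r) a.
Proof.
  intros Hh Hx. apply (cont_param_R (fun a ph => h (Epar x r a ph))); [apply twoPI_pos|].
  apply filter_forall. intros y t _. apply cont_Epar; auto.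
Qed.

Lemma S4 h x r : bcontH3 h -> inH3 x -> RInt (Jhat h x r) (-1) 1 = FnE h x r.
Proof.
  intros Hh Hx.
  assert (HJ : forall v, -1 <= v <= 1 -> continuous (Jhat h x r) v).
  { intros v Hv. apply cont_Jhat; auto. apply chs_neg_pos; auto. }
  assert (H1 : forall y, Rmin 0 PI <= y <= Rmax 0 PI -> continuous (Jhat h x r) (cos y)).
  { intros y _. apply HJ. apply COS_bound. }
  assert (H2 : forall y, Rmin 0 PI <= y <= Rmax 0 PI -> is_derive cos y (- sin y) /\ continuous (fun y => - sin y) y).
  { intros y _. split; [auto_derive; auto; ring| cont]. }
  assert (Hc := is_RInt_comp (V := R_CompleteNormedModule) (Jhat h x r) cos (fun y => - sin y) 0 PI H1 H2).
  rewrite cos_0, cos_PI in Hc.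
  assert (HexJ : ex_RInt (Jhat h x r) 1 (-1)).
  { apply ex_RInt_cont. intros t Ht. apply HJ. unfold Rmin, Rmax in Ht; destruct Rle_dec; lra. }
  rewrite <- (opp_RInt_swap (Jhat h x r) 1 (-1) HexJ).
  rewrite <- (is_RInt_unique _ _ _ _ Hc).
  rewrite <- (RInt_opp (V := R_CompleteNormedModule)) by (eexists; exact Hc).
  unfold FnE. apply RInt_ext. intros y Hy. rewrite Rmin_left in Hy by (assert (h0 := PI_RGT_0); lra).
  rewrite Rmax_right in Hy by (assert (h0 := PI_RGT_0); lra).
  unfold opp, scal; simpl; unfold mult; simpl. unfold Jhat, Jint.
  assert (E : (fun ph => h (Phat x r (cos y) ph)) = (fun ph => h (Epar x r y ph))).
  { apply functional_extensionality. intros ph. unfold Phat, Epar, Yf.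
    rewrite sin_sqrt by lra. reflexivity. }
  rewrite E. ring.
Qed.

Theorem sphere_E h x r : bcontH3 h -> inH3 x -> sphere_integral h x r = sinh r ^ 2 * FnE h x r.
Proof.
  intros Hh Hx. rewrite S1, S2, S3, S4 by auto. reflexivity.
Qed.



Definition Wf (x : pt) r a := pz x / (cosh r - sinh r * cos a) ^ 2.
Definition Dfun (d1 d2 d3 : pt -> R) x r a ph :=
  d1 (Epar x r a ph) * (Wf x r a * sin a * cos ph) + d2 (Epar x r a ph) * (Wf x r a * sin a * sin ph)
  + d3 (Epar x r a ph) * (- Wf x r a * (sinh r - cosh r * cos a)).

Lemma deriv_E1 x r a ph :
  derivable_pt_lim (fun t => px x + Yf x t a * sinh t * sin a * cos ph) r (Wf x r a * sin a * cos ph).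
Proof.
  apply is_derive_Reals. assert (Hp := cosh_minus_sinh_cos r a).
  unfold Yf, Wf. unfold cosh, sinh in *. auto_derive.
  - lra.
  - rewrite !exp_Ropp in *. assert (He : 0 < exp r) by apply exp_pos.
    set (e := exp r) in *.
    assert (Key : 0 < e * e + 1 - (e * e - 1) * cos a).
    { replace (e * e + 1 - (e * e - 1) * cos a) with (2 * e * ((e + / e) / 2 - (e - / e) / 2 * cos a)) by (field; lra).
      apply Rmult_lt_0_compat; lra. }
    field. repeat split; lra.
Qed.

Ltac exp_field r a :=
  rewrite !exp_Ropp in *; assert (He : 0 < exp r) by apply exp_pos;
  set (e := exp r) in *;
  assert (Key : 0 < e * e + 1 - (e * e - 1) * cos a);
  [ replace (e * e + 1 - (e * e - 1) * cos a) with (2 * e * ((e + / e) / 2 - (e - / e) / 2 * cos a)) by (field; lra);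
    apply Rmult_lt_0_compat; lra
  | field; repeat split; lra ].

Lemma deriv_E2 x r a ph :
  derivable_pt_lim (fun t => py x + Yf x t a * sinh t * sin a * sin ph) r (Wf x r a * sin a * sin ph).
Proof.
  apply is_derive_Reals. assert (Hp := cosh_minus_sinh_cos r a).
  unfold Yf, Wf. unfold cosh, sinh in *. auto_derive; [lra| exp_field r a].
Qed.

Lemma deriv_E3 x r a :
  derivable_pt_lim (fun t => Yf x t a) r (- Wf x r a * (sinh r - cosh r * cos a)).
Proof.
  apply is_derive_Reals. assert (Hp := cosh_minus_sinh_cos r a).
  unfold Yf, Wf. unfold cosh, sinh in *. auto_derive; [lra| exp_field r a].
Qed.

Lemma deriv_fE f d1 d2 d3 x r a ph : has_partials f d1 d2 d3 -> bcontH3 d1 -> bcontH3 d2 -> bcontH3 d3 ->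
  inH3 x -> is_derive (fun t => f (Epar x t a ph)) r (Dfun d1 d2 d3 x r a ph).
Proof.
  intros Hp H1 H2 H3 Hx. apply is_derive_Reals.
  apply (chain3 f d1 d2 d3 (fun t => px x + Yf x t a * sinh t * sin a * cos ph)
     (fun t => py x + Yf x t a * sinh t * sin a * sin ph) (fun t => Yf x t a)); auto.
  - apply deriv_E1.
  - apply deriv_E2.
  - apply deriv_E3.
  - apply Yf_pos; auto.
Qed.

Lemma cont_Dfun3 d1 d2 d3 x q : bcontH3 d1 -> bcontH3 d2 -> bcontH3 d3 -> inH3 x ->
  continuous (fun q : (R * R) * R => Dfun d1 d2 d3 x (fst (fst q)) (snd (fst q)) (snd q)) q.
Proof.
  intros H1 H2 H3 Hx. destruct q as [[r a] ph]. unfold Dfun, Wf.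
  assert (Hd : forall d, bcontH3 d -> continuous (fun q : (R * R) * R => d (Epar x (fst (fst q)) (snd (fst q)) (snd q))) ((r, a), ph)).
  { intros d Hd. unfold Epar, Yf. apply comp_cont; auto; try cont.
    cbn [fst snd]. apply Rdiv_lt_0_compat; [exact Hx| apply cosh_minus_sinh_cos]. }
  apply cR_plus; [apply cR_plus|]; apply cR_mult; try apply Hd; auto; cont;
  apply pow_nonzero; apply Rgt_not_eq; apply cosh_minus_sinh_cos.
Qed.

Lemma cont_pair_id {A B : UniformSpace} (q : A * B) : continuous (fun x0 : A * B => (fst x0, snd x0)) q.
Proof.
  replace (fun x0 : A * B => (fst x0, snd x0)) with (fun x0 : A * B => x0).
  - apply continuous_id.
  - apply functional_extensionality. intros [u v]. reflexivity.
Qed.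

Lemma cont_Dfun2 d1 d2 d3 x a r ph : bcontH3 d1 -> bcontH3 d2 -> bcontH3 d3 -> inH3 x ->
  continuous (fun q : R * R => Dfun d1 d2 d3 x (fst q) a (snd q)) (r, ph).
Proof.
  intros H1 H2 H3 Hx.
  apply (continuous_comp (fun q : R * R => ((fst q, a), snd q))
           (fun q : (R * R) * R => Dfun d1 d2 d3 x (fst (fst q)) (snd (fst q)) (snd q))).
  - apply (continuous_comp_2 (fun q : R * R => (fst q, a)) snd pair).
    + apply (continuous_comp_2 fst (fun _ => a) pair); [apply cR_fst| apply cR_const|].
      apply cont_pair_id.
    + apply cR_snd.
    + apply cont_pair_id.
  - apply cont_Dfun3; auto.
Qed.

Lemma is_derive_Jint f d1 d2 d3 x a r : has_partials f d1 d2 d3 -> bcontH3 d1 -> bcontH3 d2 -> bcontH3 d3 ->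
  bcontH3 f -> inH3 x ->
  is_derive (fun r => Jint f x r a) r (RInt (fun ph => Dfun d1 d2 d3 x r a ph) 0 (2*PI)).
Proof.
  intros Hp H1 H2 H3 Hf Hx.
  assert (HD : forall u v, Derive (fun z => f (Epar x z a v)) u = Dfun d1 d2 d3 x u a v).
  { intros u v. apply is_derive_unique. apply deriv_fE; auto. }
  assert (Hd := is_derive_RInt_param (fun u ph => f (Epar x u a ph)) 0 (2*PI) r).
  replace (RInt (fun ph => Dfun d1 d2 d3 x r a ph) 0 (2*PI))
    with (RInt (fun t => Derive (fun u => f (Epar x u a t)) r) 0 (2*PI)).
  2:{ apply RInt_ext. intros t _. apply HD. }
  unfold Jint. apply Hd.
  - apply filter_forall. intros y t0 _. exists (Dfun d1 d2 d3 x y a t0). apply deriv_fE; auto.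
  - intros t _. cbv beta.
    replace (fun u v => Derive (fun z => f (Epar x z a v)) u) with (fun u v => Dfun d1 d2 d3 x u a v).
    2:{ apply functional_extensionality; intros u. apply functional_extensionality; intros v. symmetry; apply HD. }
    apply continuity_2d_pt_filterlim. apply (cont_Dfun2 d1 d2 d3 x a r t); auto.
  - apply filter_forall. intros y. apply ex_RInt_cont. intros t _.
    apply (cont_slice (fun a0 ph => f (Epar x y a0 ph)) a t). apply cont_Epar; auto.
Qed.

Lemma is_derive_Fn f d1 d2 d3 x r : has_partials f d1 d2 d3 -> bcontH3 d1 -> bcontH3 d2 -> bcontH3 d3 ->
  bcontH3 f -> inH3 x ->
  is_derive (FnE f x) r (RInt (fun a => sin a * RInt (fun ph => Dfun d1 d2 d3 x r a ph) 0 (2*PI)) 0 PI).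
Proof.
  intros Hp H1 H2 H3 Hf Hx.
  assert (HD : forall u v, Derive (fun z => sin v * Jint f x z v) u =
                           sin v * RInt (fun ph => Dfun d1 d2 d3 x u v ph) 0 (2*PI)).
  { intros u v. apply is_derive_unique. apply is_derive_scal. apply is_derive_Jint; auto. }
  assert (Hd := is_derive_RInt_param (fun u a => sin a * Jint f x u a) 0 PI r).
  replace (RInt (fun a => sin a * RInt (fun ph => Dfun d1 d2 d3 x r a ph) 0 (2*PI)) 0 PI)
    with (RInt (fun t => Derive (fun u => sin t * Jint f x u t) r) 0 PI).
  2:{ apply RInt_ext. intros t _. apply HD. }
  unfold FnE. apply Hd.
  - apply filter_forall. intros y t0 _. apply ex_derive_scal. exists (RInt (fun ph => Dfun d1 d2 d3 x y t0 ph) 0 (2*PI)). apply is_derive_Jint; auto.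
  - intros t _. cbv beta.
    replace (fun u v => Derive (fun z => sin v * Jint f x z v) u)
      with (fun u v => sin v * RInt (fun ph => Dfun d1 d2 d3 x u v ph) 0 (2*PI)).
    2:{ apply functional_extensionality; intros u. apply functional_extensionality; intros v. symmetry; apply HD. }
    apply continuity_2d_pt_filterlim.
    apply (cR_mult (fun z : R * R => sin (snd z)) (fun z => RInt (fun ph => Dfun d1 d2 d3 x (fst z) (snd z) ph) 0 (2*PI))).
    + cont.
    + apply (cont_param (fun (p : R * R) ph => Dfun d1 d2 d3 x (fst p) (snd p) ph)); [apply twoPI_pos| |].
      * intros ph _. apply cont_Dfun3; auto.
      * apply filter_forall. intros p ph _.
        apply (cont_slice (fun (p : R * R) ph => Dfun d1 d2 d3 x (fst p) (snd p) ph)). apply cont_Dfun3; auto.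
  - apply filter_forall. intros y. apply ex_RInt_cont. intros t _.
    apply cR_mult; [cont| apply cont_Jint; auto].
Qed.

Lemma sq_le_abs (t y : R) : 0 <= y -> t^2 <= y^2 -> Rabs t <= y.
Proof.
  intros Hy H. rewrite <- (Rabs_right y) by lra. apply Rsqr_le_abs_0. unfold Rsqr. nra.
Qed.

Lemma angle_bound t e : Rabs t <= PI -> 0 <= e -> 1 - cos t <= e -> Rabs t <= 5 * sqrt e.
Proof.
  intros Ht He Hc. assert (H := one_minus_cos_ge t Ht).
  apply sq_le_abs. { assert (0 <= sqrt e) by apply sqrt_pos. lra. }
  replace ((5 * sqrt e) ^ 2) with (25 * (sqrt e ^ 2)) by ring. rewrite pow2_sqrt by lra. lra.
Qed.

Lemma polar_exists u1 u2 u3 : u1^2 + u2^2 + u3^2 = 1 ->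
  exists ab pb, 0 <= ab <= PI /\ u1 = sin ab * cos pb /\ u2 = sin ab * sin pb /\ u3 = cos ab.
Proof.
  intros Hu.
  assert (H3 : -1 <= u3 <= 1).
  { assert (u3^2 <= 1) by nra. split; nra. }
  exists (acos u3).
  assert (Hs : sin (acos u3) = sqrt (u1^2 + u2^2)).
  { rewrite sin_acos by exact H3. f_equal. unfold Rsqr. lra. }
  set (rho := sqrt (u1^2 + u2^2)) in *.
  assert (Hrho : rho * rho = u1^2 + u2^2) by (apply sqrt_sqrt; nra).
  assert (Hr0 : 0 <= rho) by apply sqrt_pos.
  destruct (Req_dec rho 0) as [Z|Z].
  - exists 0. rewrite Hs, Z, cos_0, sin_0. rewrite Z in Hrho.
    assert (u1 = 0) by nra. assert (u2 = 0) by nra.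
    repeat split; try apply acos_bound; try lra. rewrite cos_acos; auto.
  - assert (Hrp : 0 < rho) by lra.
    set (v := u1 / rho). set (w := u2 / rho).
    assert (Hvw : v^2 + w^2 = 1) by (unfold v, w; field_simplify; [|lra]; rewrite <- Hrho; field; lra).
    assert (Hv : -1 <= v <= 1) by (split; nra).
    assert (Hsw : sqrt (1 - v²) = Rabs w).
    { rewrite <- sqrt_Rsqr_abs. f_equal. unfold Rsqr. lra. }
    destruct (Rle_dec 0 w) as [Hw|Hw].
    + exists (acos v). repeat split; try apply acos_bound.
      * rewrite Hs, cos_acos by auto. unfold v. field. lra.
      * rewrite Hs, sin_acos by auto. rewrite Hsw, Rabs_right by lra. unfold w. field. lra.
      * rewrite cos_acos; auto.
    + exists (- acos v). repeat split; try apply acos_bound.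
      * rewrite Hs, cos_neg, cos_acos by auto. unfold v. field. lra.
      * rewrite Hs, sin_neg, sin_acos by auto. rewrite Hsw, Rabs_left by lra. unfold w. field. lra.
      * rewrite cos_acos; auto.
Qed.

Lemma div_le_div a b c d : 0 < b -> 0 < d -> a * d <= c * b -> a / b <= c / d.
Proof.
  intros Hb Hd H. replace (a / b) with ((a * d) * / (b * d)) by (field; lra).
  replace (c / d) with ((c * b) * / (b * d)) by (field; lra).
  apply Rmult_le_compat_r; [left; apply Rinv_0_lt_compat; nra| exact H].
Qed.

Lemma inner_small (k : R -> R) pb d M : (forall t, continuous k t) -> (forall t, k (t + 2*PI) = k t) ->
  0 <= d -> (forall t, Rabs (k t) <= M) ->
  (forall t, pb - PI <= t <= pb + PI -> d < Rabs (t - pb) -> k t = 0) ->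
  Rabs (RInt k 0 (2*PI)) <= 2 * d * M.
Proof.
  intros Hc Hp Hd Hb Hz. rewrite <- (RInt_periodic_shift k (pb - PI)) by auto.
  assert (h0 := PI_RGT_0).
  apply RInt_small_support with (t0 := pb); auto; try lra.
  intros t Ht. apply Hz. lra.
Qed.

Lemma inner_triv (k : R -> R) M : (forall t, continuous k t) -> (forall t, Rabs (k t) <= M) ->
  Rabs (RInt k 0 (2*PI)) <= 2 * PI * M.
Proof.
  intros Hc Hb. assert (h0 := PI_RGT_0).
  replace (2 * PI * M) with ((2 * PI - 0) * M) by ring.
  apply abs_RInt_le_const; [lra| |auto].
  apply ex_RInt_cont. intros; auto.
Qed.

Lemma CS3 x1 x2 x3 y1 y2 y3 : (x1*y1 + x2*y2 + x3*y3)^2 <= (x1^2+x2^2+x3^2) * (y1^2+y2^2+y3^2).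
Proof.
  assert (E : (x1^2+x2^2+x3^2) * (y1^2+y2^2+y3^2) - (x1*y1 + x2*y2 + x3*y3)^2 =
    (x1*y2-x2*y1)^2 + (x1*y3-x3*y1)^2 + (x2*y3-x3*y2)^2) by ring.
  assert (0 <= (x1*y2-x2*y1)^2) by apply pow2_ge_0.
  assert (0 <= (x1*y3-x3*y1)^2) by apply pow2_ge_0.
  assert (0 <= (x2*y3-x3*y2)^2) by apply pow2_ge_0. lra.
Qed.

Lemma unit_n a ph : (sin a * cos ph)^2 + (sin a * sin ph)^2 + (cos a)^2 = 1.
Proof.
  assert (H1 := sin2_cos2 a). assert (H2 := sin2_cos2 ph). unfold Rsqr in *.
  replace ((sin a * cos ph)^2 + (sin a * sin ph)^2 + (cos a)^2)
    with (sin a * sin a * (sin ph * sin ph + cos ph * cos ph) + cos a * cos a) by ring.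
  rewrite H2. lra.
Qed.

Lemma measure_bound (h : R -> R -> R) (al b1 b2 b3 C c M : R) :
  0 < al -> 1 <= C -> c^2 <= al^2 - (b1^2 + b2^2 + b3^2) -> 4 * C^2 <= c^2 -> 0 <= M ->
  (forall a ph, Rabs (h a ph) <= M) ->
  (forall a ph, C < al - (b1 * (sin a * cos ph) + b2 * (sin a * sin ph) + b3 * cos a) -> h a ph = 0) ->
  (forall a ph, JC h a ph) ->
  (forall a ph, h a (ph + 2*PI) = h a ph) ->
  Rabs (RInt (fun a => sin a * RInt (fun ph => h a ph) 0 (2*PI)) 0 PI) <= 3000 * M * C^2 / c^2.
Proof.
  intros Hal HC Hc HCc HM Hb Hz HJ Hper.
  assert (hPI := PI_RGT_0). assert (hPI4 := PI_4).
  assert (Hc2 : 0 < c^2) by nra.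
  assert (Hbound0 : 0 <= 3000 * M * C^2 / c^2).
  { apply Rmult_le_pos; [| left; apply Rinv_0_lt_compat; lra]. assert (0 <= C^2) by nra. nra. }
  set (lam2 := b1^2 + b2^2 + b3^2) in *.
  assert (Hl2 : 0 <= lam2) by (unfold lam2; nra).
  set (lam := sqrt lam2).
  assert (Hlam : lam * lam = lam2) by (apply sqrt_sqrt; auto).
  assert (Hlam0 : 0 <= lam) by apply sqrt_pos.
  assert (HCS : forall a ph, b1 * (sin a * cos ph) + b2 * (sin a * sin ph) + b3 * cos a <= lam).
  { intros a ph. set (d := b1 * (sin a * cos ph) + b2 * (sin a * sin ph) + b3 * cos a).
    assert (H := CS3 b1 b2 b3 (sin a * cos ph) (sin a * sin ph) (cos a)). rewrite unit_n in H.
    assert (Rabs d <= lam). { apply sq_le_abs; auto. unfold d. fold lam2 in H. nra. }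
    assert (h1 := Rle_abs d). lra. }
  assert (Hslice : forall a ph, continuous (h a) ph) by (intros; apply cont_slice; apply HJ).
  assert (Hcg : forall a, continuous (fun a => sin a * RInt (fun ph => h a ph) 0 (2*PI)) a).
  { intros a. apply (cR_mult (fun a => sin a) (fun a => RInt (fun ph => h a ph) 0 (2*PI))).
    - apply continuous_sin.
    - apply (cont_param_R h); [lra|]. apply filter_forall. intros; apply HJ. }
  destruct (Rlt_dec C (al - lam)) as [HA|HB].
  -
    rewrite (RInt_zero_fun _ 0 PI).
    + rewrite Rabs_R0. exact Hbound0.
    + intros a _. rewrite (RInt_zero_fun (fun ph => h a ph) 0 (2*PI)). { ring. }
      intros ph _. apply Hz. specialize (HCS a ph). lra.
  - apply Rnot_lt_le in HB.
    assert (Hlal : lam < al).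
    { assert (lam2 < al^2) by lra. nra. }
    assert (HC1 : c^2 <= C * (al + lam)).
    { assert (c^2 <= (al - lam) * (al + lam)) by (replace ((al - lam) * (al + lam)) with (al^2 - lam * lam) by ring; lra).
      assert ((al - lam) * (al + lam) <= C * (al + lam)) by (apply Rmult_le_compat_r; lra). lra. }
    assert (Hlamlb : 3 * c^2 <= 8 * C * lam).
    { assert (c^2 <= C * (2 * lam + C)) by (assert (C * (al + lam) <= C * (2 * lam + C)) by (apply Rmult_le_compat_l; lra); lra).
      nra. }
    assert (Hlpos : 0 < lam) by nra.
    set (eta := (lam - al + C) / lam).
    assert (Heta0 : 0 <= eta) by (unfold eta; apply Rmult_le_pos; [lra| left; apply Rinv_0_lt_compat; lra]).
    assert (Heta1 : eta <= 8 * C^2 / (3 * c^2)).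
    { apply div_le_div; [lra| lra|]. assert (0 <= C) by lra. nra. }
    set (u1 := b1 / lam). set (u2 := b2 / lam). set (u3 := b3 / lam).
    assert (Hu : u1^2 + u2^2 + u3^2 = 1).
    { unfold u1, u2, u3. replace ((b1 / lam) ^ 2 + (b2 / lam) ^ 2 + (b3 / lam) ^ 2) with (lam2 / (lam * lam)) by (unfold lam2; field; lra).
      rewrite Hlam. field. nra. }
    destruct (polar_exists u1 u2 u3 Hu) as [ab [pb [Hab [E1 [E2 E3]]]]].
    assert (Hkey : forall a ph, h a ph <> 0 ->
       (1 - cos (a - ab)) + sin a * sin ab * (1 - cos (ph - pb)) <= eta).
    { intros a ph Hn.
      assert (Hle : al - (b1 * (sin a * cos ph) + b2 * (sin a * sin ph) + b3 * cos a) <= C).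
      { apply Rnot_lt_le. intro Hc'. apply Hn. apply Hz; auto. }
      assert (Eb1 : b1 = lam * u1) by (unfold u1; field; lra).
      assert (Eb2 : b2 = lam * u2) by (unfold u2; field; lra).
      assert (Eb3 : b3 = lam * u3) by (unfold u3; field; lra).
      rewrite Eb1, Eb2, Eb3, E1, E2, E3 in Hle.
      rewrite !cos_minus.
      assert (X : (1 - (cos a * cos ab + sin a * sin ab)) + sin a * sin ab * (1 - (cos ph * cos pb + sin ph * sin pb))
         = 1 - (sin ab * cos pb * (sin a * cos ph) + sin ab * sin pb * (sin a * sin ph) + cos ab * cos a)) by ring.
      rewrite X. unfold eta.
      apply Rmult_le_reg_r with lam; auto. field_simplify; [|lra]. nra. }
    assert (Hsinab : 0 <= sin ab) by (apply sin_ge_0; lra).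
    set (s := sqrt eta).
    assert (Hs0 : 0 <= s) by apply sqrt_pos.
    assert (Hss : s * s = eta) by (apply sqrt_sqrt; auto).
    assert (Hout : forall a, 0 <= a <= PI -> 5 * s < Rabs (a - ab) -> forall ph, h a ph = 0).
    { intros a Ha Hd ph. apply NNPP. intro Hn. apply Hkey in Hn.
      assert (0 <= 1 - cos (ph - pb)) by (assert (h1 := COS_bound (ph - pb)); lra).
      assert (0 <= sin a) by (apply sin_ge_0; lra).
      assert (0 <= sin a * sin ab * (1 - cos (ph - pb))) by (apply Rmult_le_pos; [apply Rmult_le_pos|]; lra).
      assert (Ha' : Rabs (a - ab) <= PI) by (apply Rabs_le; lra).
      assert (Rabs (a - ab) <= 5 * sqrt eta) by (apply angle_bound; auto; lra).
      fold s in H2. lra. }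
    assert (Hfinal : Rabs (RInt (fun a => sin a * RInt (fun ph => h a ph) 0 (2*PI)) 0 PI) <= 2 * (5 * s) * (100 * s * M)).
    { apply RInt_small_support with (t0 := ab); try lra.
      - intros t _. apply Hcg.
      - intros a Ha. destruct (Rle_dec (Rabs (a - ab)) (5 * s)) as [Hin|Hout'].
        2:{ rewrite (RInt_zero_fun (fun ph => h a ph) 0 (2*PI)).
            - rewrite Rmult_0_r, Rabs_R0. apply Rmult_le_pos; [|lra]. apply Rmult_le_pos; lra.
            - intros ph _. apply Hout; auto. lra. }
        assert (Hsa : 0 <= sin a) by (apply sin_ge_0; lra).
        rewrite Rabs_mult, (Rabs_right (sin a)) by lra.
        assert (Htriv := inner_triv (h a) M (Hslice a) (Hb a)).
        destruct (Rlt_dec (2 * sin ab) (sin a)) as [Hbig|Hsmall].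
        + assert (Hsl := sin_lipschitz a ab). rewrite Rabs_right in Hsl by lra.
          assert (sin a <= 10 * s) by lra.
          apply Rle_trans with (sin a * (2 * PI * M)). { apply Rmult_le_compat_l; auto. }
          assert (sin a * (2 * PI * M) <= (10 * s) * (2 * 4 * M)).
          { apply Rmult_le_compat; try nra. }
          nra.
        + apply Rnot_lt_le in Hsmall.
          destruct (Req_dec (sin a) 0) as [Z|Z].
          { rewrite Z, Rmult_0_l. apply Rmult_le_pos; [|lra]. apply Rmult_le_pos; lra. }
          assert (Hsap : 0 < sin a) by lra. assert (Hsabp : 0 < sin ab) by lra.
          set (kap := sin a * sin ab).
          assert (Hkap : 0 < kap) by (unfold kap; nra).
          set (dph := 5 * sqrt (eta / kap)).
          assert (Hdph0 : 0 <= dph) by (unfold dph; assert (h1 := sqrt_pos (eta / kap)); lra).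
          assert (Hin2 : Rabs (RInt (fun ph => h a ph) 0 (2*PI)) <= 2 * dph * M).
          { apply inner_small with (pb := pb); auto.
            intros t Ht Hd. apply NNPP. intro Hn. apply Hkey in Hn.
            assert (0 <= 1 - cos (a - ab)) by (assert (h1 := COS_bound (a - ab)); lra).
            assert (Hq : 1 - cos (t - pb) <= eta / kap).
            { apply Rmult_le_reg_l with kap; auto. replace (kap * (eta / kap)) with eta by (field; lra).
              unfold kap. lra. }
            assert (Rabs (t - pb) <= dph).
            { apply angle_bound; auto. apply Rabs_le; lra.
              apply Rmult_le_pos; [lra | left; apply Rinv_0_lt_compat; lra]. }
            lra. }
          assert (Hsd : sin a * dph <= 8 * s).
          { assert (Habs : Rabs (sin a * dph) <= 8 * s).
            { apply sq_le_abs; [lra|].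
              assert (Hsq : (sin a * dph) ^ 2 = 25 * eta * (sin a / sin ab)).
              { unfold dph. replace ((sin a * (5 * sqrt (eta / kap))) ^ 2) with (25 * sin a ^ 2 * (sqrt (eta / kap) ^ 2)) by ring.
                rewrite pow2_sqrt by (apply Rmult_le_pos; [lra | left; apply Rinv_0_lt_compat; lra]).
                unfold kap. field. lra. }
              rewrite Hsq. replace ((8 * s) ^ 2) with (64 * (s * s)) by ring. rewrite Hss.
              assert (sin a / sin ab <= 2) by (apply Rmult_le_reg_r with (sin ab); [lra|]; replace (sin a / sin ab * sin ab) with (sin a) by (field; lra); lra).
              nra. }
            assert (h1 := Rle_abs (sin a * dph)). lra. }
          apply Rle_trans with (sin a * (2 * dph * M)). { apply Rmult_le_compat_l; auto. }
          replace (sin a * (2 * dph * M)) with (2 * M * (sin a * dph)) by ring.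
          assert (2 * M * (sin a * dph) <= 2 * M * (8 * s)) by (apply Rmult_le_compat_l; lra).
          nra.
      - intros a Ha Hd. rewrite (RInt_zero_fun (fun ph => h a ph) 0 (2*PI)). { ring. }
        intros ph _. apply Hout; auto. }
    eapply Rle_trans; [exact Hfinal|].
    replace (2 * (5 * s) * (100 * s * M)) with (1000 * (s * s) * M) by ring. rewrite Hss.
    set (q := C ^ 2 / c ^ 2).
    assert (Hq0 : 0 <= q) by (unfold q; apply Rmult_le_pos; [nra | left; apply Rinv_0_lt_compat; lra]).
    assert (Hcn : c <> 0) by (intro Z; rewrite Z in Hc2; lra).
    replace (8 * C ^ 2 / (3 * c ^ 2)) with (8 / 3 * q) in Heta1 by (unfold q; field; exact Hcn).
    replace (3000 * M * C ^ 2 / c ^ 2) with (3000 * M * q) by (unfold q; field; exact Hcn).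
    nra.
Qed.

Definition mf (x0 x : pt) := (px x0 - px x)^2 + (py x0 - py x)^2 + pz x0 ^ 2.
Definition alf (x0 x : pt) r := (mf x0 x + pz x ^ 2) * cosh r / (2 * pz x0 * pz x).
Definition b1f (x0 x : pt) r := sinh r * (px x0 - px x) / pz x0.
Definition b2f (x0 x : pt) r := sinh r * (py x0 - py x) / pz x0.
Definition b3f (x0 x : pt) r := sinh r * (mf x0 x - pz x ^ 2) / (2 * pz x0 * pz x).
Definition uf (x0 y : pt) := 1 + edist2 x0 y / (2 * pz x0 * pz y).

Lemma u_id x0 x r a ph : inH3 x0 -> inH3 x ->
  uf x0 (Epar x r a ph) = alf x0 x r - (b1f x0 x r * (sin a * cos ph) + b2f x0 x r * (sin a * sin ph) + b3f x0 x r * cos a).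
Proof.
  intros H0 Hx. unfold uf, edist2, Epar. cbn [px py pz fst snd].
  assert (HY := Yf_pos x r a Hx).
  set (Y := Yf x r a) in *.
  set (K := Y * sinh r * sin a).
  assert (Hph := sin2_cos2 ph). assert (Ha := sin2_cos2 a). unfold Rsqr in Hph, Ha.
  assert (E1 : (px x0 - (px x + K * cos ph)) ^ 2 + (py x0 - (py x + K * sin ph)) ^ 2
     = (px x0 - px x)^2 + (py x0 - py x)^2 - 2 * K * ((px x0 - px x) * cos ph + (py x0 - py x) * sin ph) + K ^ 2).
  { replace ((px x0 - (px x + K * cos ph)) ^ 2 + (py x0 - (py x + K * sin ph)) ^ 2)
      with ((px x0 - px x)^2 + (py x0 - py x)^2 - 2 * K * ((px x0 - px x) * cos ph + (py x0 - py x) * sin ph)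
            + K ^ 2 * (sin ph * sin ph + cos ph * cos ph)) by ring.
    rewrite Hph. ring. }
  rewrite E1.
  assert (E2 : K ^ 2 = Y ^ 2 * sinh r ^ 2 * (1 - cos a ^ 2)).
  { unfold K. replace (1 - cos a ^ 2) with (sin a * sin a) by lra. ring. }
  rewrite E2. unfold K. unfold Y, Yf, alf, b1f, b2f, b3f, mf.
  unfold inH3 in H0, Hx.
  assert (Hp := cosh_minus_sinh_cos r a).
  unfold cosh, sinh in *.
  rewrite !exp_Ropp in *. assert (He : 0 < exp r) by apply exp_pos.
  set (e := exp r) in *.
  assert (Key : 0 < e * e + 1 - (e * e - 1) * cos a).
  { replace (e * e + 1 - (e * e - 1) * cos a) with (2 * e * ((e + / e) / 2 - (e - / e) / 2 * cos a)) by (field; repeat split; intro; nra).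
    apply Rmult_lt_0_compat; lra. }
  field. repeat split; lra.
Qed.

Lemma abs_le_split t a : Rabs t <= a -> - a <= t <= a.
Proof. unfold Rabs. destruct Rcase_abs; lra. Qed.

Lemma exp_mono x y : x <= y -> exp x <= exp y.
Proof. intros [H|H]; [left; apply exp_increasing; auto| right; rewrite H; auto]. Qed.

Lemma one_le_div a b : 0 < b -> b <= a -> 1 <= a / b.
Proof.
  intros Hb Hab. replace (a / b) with (a * / b) by reflexivity.
  apply Rmult_le_reg_r with b; auto. rewrite Rmult_assoc, Rinv_l by lra. lra.
Qed.

Lemma al_pos x0 x r : inH3 x0 -> inH3 x -> 0 < alf x0 x r.
Proof.
  intros H0 Hx. unfold alf, mf, inH3 in *. assert (h := cosh_pos r).
  assert (h1 := pow2_ge_0 (px x0 - px x)). assert (h2 := pow2_ge_0 (py x0 - py x)).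
  assert (0 < pz x0 ^ 2) by nra.  assert (0 < pz x ^ 2) by nra.
  apply Rdiv_lt_0_compat; [| nra]. apply Rmult_lt_0_compat; [|lra]. lra.
Qed.

Lemma al_b x0 x r : inH3 x0 -> inH3 x ->
  cosh r ^ 2 <= alf x0 x r ^ 2 - (b1f x0 x r ^ 2 + b2f x0 x r ^ 2 + b3f x0 x r ^ 2).
Proof.
  intros H0 Hx. unfold inH3 in *.
  assert (Eq : alf x0 x r ^ 2 - (b1f x0 x r ^ 2 + b2f x0 x r ^ 2 + b3f x0 x r ^ 2)
     = (mf x0 x + pz x ^ 2) ^ 2 / (4 * pz x0 ^ 2 * pz x ^ 2) + sinh r ^ 2).
  { unfold alf, b1f, b2f, b3f, mf. unfold cosh, sinh. rewrite !exp_Ropp.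
    assert (He : 0 < exp r) by apply exp_pos. set (e := exp r) in *. field. repeat split; intro; lra. }
  rewrite Eq. assert (Hcs := cosh_sinh_sq r).
  assert (1 <= (mf x0 x + pz x ^ 2) ^ 2 / (4 * pz x0 ^ 2 * pz x ^ 2)).
  { assert (Hm : 2 * pz x0 * pz x <= mf x0 x + pz x ^ 2).
    { unfold mf. assert (0 <= (pz x0 - pz x)^2) by apply pow2_ge_0.
      assert (0 <= (px x0 - px x)^2) by apply pow2_ge_0. assert (0 <= (py x0 - py x)^2) by apply pow2_ge_0. nra. }
    assert (Hd : 0 < 4 * pz x0 ^ 2 * pz x ^ 2) by (apply Rmult_lt_0_compat; [nra| nra]).
    apply one_le_div; auto.
    assert (0 <= 2 * pz x0 * pz x) by nra.
    replace (4 * pz x0 ^ 2 * pz x ^ 2) with ((2 * pz x0 * pz x) ^ 2) by ring.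
    apply pow_incr. lra. }
  lra.
Qed.

Lemma uf_ge1 x0 y : inH3 x0 -> inH3 y -> 1 <= uf x0 y.
Proof.
  intros H0 Hy. unfold uf, inH3 in *. assert (0 <= edist2 x0 y).
  { unfold edist2. assert (h1 := pow2_ge_0 (px x0 - px y)). assert (h2 := pow2_ge_0 (py x0 - py y)).
    assert (h3 := pow2_ge_0 (pz x0 - pz y)). lra. }
  assert (0 <= edist2 x0 y / (2 * pz x0 * pz y)) by (apply Rmult_le_pos; [lra| left; apply Rinv_0_lt_compat; nra]).
  lra.
Qed.

Lemma hdist_u x0 y R : inH3 x0 -> inH3 y -> hdist x0 y <= R -> uf x0 y <= cosh R.
Proof.
  intros H0 Hy Hd. assert (Hu := uf_ge1 x0 y H0 Hy).
  unfold hdist in Hd. fold (uf x0 y) in Hd.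
  set (u := uf x0 y) in *.
  set (q := sqrt (u * u - 1)).
  assert (Hq : q * q = u * u - 1) by (apply sqrt_sqrt; nra).
  assert (Hq0 : 0 <= q) by apply sqrt_pos.
  set (w := u + q).
  assert (Hw1 : 1 <= w) by (unfold w; lra).
  assert (HwR : w <= exp R).
  { rewrite <- (exp_ln w) by lra. apply exp_mono. exact Hd. }
  assert (Hinv : (u - q) * w = 1) by (unfold w; nra).
  assert (Hu2 : u = (w + / w) / 2).
  { assert (u - q = / w) by (apply Rmult_eq_reg_r with w; [rewrite Rinv_l; lra| lra]). unfold w in *. lra. }
  rewrite Hu2. unfold cosh.
  rewrite exp_Ropp. set (E := exp R) in *.
  assert (HE : 0 < E) by (unfold E; apply exp_pos).
  assert (Hk : (E - w) * (w * E - 1) >= 0) by (apply Rle_ge; apply Rmult_le_pos; nra).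
  apply Rmult_le_reg_r with (2 * w * E); [nra|].
  replace ((w + / w) / 2 * (2 * w * E)) with (w * w * E + E) by (field; repeat split; intro; nra).
  replace ((E + / E) / 2 * (2 * w * E)) with (E * E * w + w) by (field; repeat split; intro; nra).
  nra.
Qed.

Lemma u_box x0 y C : inH3 x0 -> inH3 y -> 1 <= C -> uf x0 y <= C ->
  in_box (px x0 - 2 * pz x0 * C, py x0 - 2 * pz x0 * C, pz x0 / (2 * C))
         (px x0 + 2 * pz x0 * C, py x0 + 2 * pz x0 * C, 2 * pz x0 * C) y.
Proof.
  intros H0 Hy HC Hu. unfold uf, inH3 in *.
  assert (Hd : edist2 x0 y <= 2 * pz x0 * pz y * (C - 1)).
  { assert (Hp : 0 < 2 * pz x0 * pz y) by nra.
    assert (edist2 x0 y / (2 * pz x0 * pz y) <= C - 1) by lra.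
    apply Rmult_le_reg_r with (/ (2 * pz x0 * pz y)); [apply Rinv_0_lt_compat; lra|].
    replace (2 * pz x0 * pz y * (C - 1) * / (2 * pz x0 * pz y)) with (C - 1) by (field; repeat split; intro; nra). exact H. }
  unfold edist2 in Hd.
  assert (h1 := pow2_ge_0 (px x0 - px y)). assert (h2 := pow2_ge_0 (py x0 - py y)).
  assert (h3 := pow2_ge_0 (pz x0 - pz y)).
  assert (Hz1 : pz y <= 2 * pz x0 * C) by nra.
  assert (Hz2 : pz x0 <= 2 * pz y * C) by nra.
  assert (Hh : forall t, t ^ 2 <= 2 * pz x0 * pz y * (C - 1) -> Rabs t <= 2 * pz x0 * C).
  { intros t Ht. apply sq_le_abs; [nra|]. assert (2 * pz x0 * pz y * (C - 1) <= (2 * pz x0 * C) ^ 2) by nra. lra. }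
  assert (X1 := Hh (px x0 - px y) ltac:(lra)). assert (X2 := Hh (py x0 - py y) ltac:(lra)).
  apply abs_le_split in X1. apply abs_le_split in X2.
  unfold in_box, px, py, pz in *; simpl in *.
  repeat split; try lra.
  apply Rmult_le_reg_r with (2 * C); [lra|]. unfold Rdiv. rewrite Rmult_assoc, Rinv_l by lra. lra.
Qed.

Lemma cos_per ph : cos (ph + 2 * PI) = cos ph.
Proof. rewrite cos_plus, cos_2PI, sin_2PI. ring. Qed.
Lemma sin_per ph : sin (ph + 2 * PI) = sin ph.
Proof. rewrite sin_plus, cos_2PI, sin_2PI. ring. Qed.

Lemma Epar_per x r a ph : Epar x r a (ph + 2 * PI) = Epar x r a ph.
Proof. unfold Epar. rewrite cos_per, sin_per. reflexivity. Qed.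

Lemma Dfun_per d1 d2 d3 x r a ph : Dfun d1 d2 d3 x r a (ph + 2 * PI) = Dfun d1 d2 d3 x r a ph.
Proof. unfold Dfun. rewrite Epar_per, cos_per, sin_per. reflexivity. Qed.

Lemma cont_Dfun_aph d1 d2 d3 x r a ph : bcontH3 d1 -> bcontH3 d2 -> bcontH3 d3 -> inH3 x ->
  continuous (fun q : R * R => Dfun d1 d2 d3 x r (fst q) (snd q)) (a, ph).
Proof.
  intros H1 H2 H3 Hx.
  apply (continuous_comp (fun q : R * R => ((r, fst q), snd q))
           (fun q : (R * R) * R => Dfun d1 d2 d3 x (fst (fst q)) (snd (fst q)) (snd q))).
  - apply (continuous_comp_2 (fun q : R * R => (r, fst q)) snd pair).
    + apply (continuous_comp_2 (fun _ => r) fst pair); [apply cR_const| apply cR_fst|].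
      apply cont_pair_id.
    + apply cR_snd.
    + apply cont_pair_id.
  - apply cont_Dfun3; auto.
Qed.

Lemma supp_zero f x0 R y : inH3 x0 -> inH3 y -> supp_in_ball f x0 R -> cosh R < uf x0 y -> f y = 0.
Proof.
  intros H0 Hy Hs Hu. apply Hs; auto. apply Rnot_le_lt. intro Hd.
  assert (h := hdist_u x0 y R H0 Hy Hd). lra.
Qed.

Lemma Dfun_zero f d1 d2 d3 x0 x r a ph R : has_partials f d1 d2 d3 -> bcontH3 d1 -> bcontH3 d2 -> bcontH3 d3 ->
  inH3 x0 -> inH3 x -> supp_in_ball f x0 R -> cosh R < uf x0 (Epar x r a ph) -> Dfun d1 d2 d3 x r a ph = 0.
Proof.
  intros Hp H1 H2 H3 H0 Hx Hs Hu.
  assert (Hd := deriv_fE f d1 d2 d3 x r a ph Hp H1 H2 H3 Hx).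
  assert (Hc : continuous (fun t => uf x0 (Epar x t a ph) - cosh R) r).
  { assert (Hc' : continuous (fun t => alf x0 x t - (b1f x0 x t * (sin a * cos ph) + b2f x0 x t * (sin a * sin ph) + b3f x0 x t * cos a) - cosh R) r).
    { unfold alf, b1f, b2f, b3f, mf. unfold inH3 in *. cont; intro Z; nra. }
    revert Hc'. apply continuous_ext. intros t. rewrite u_id; auto. }
  assert (Hl := loc_pos _ r Hc). cbv beta in Hl. specialize (Hl ltac:(lra)).
  assert (H0d : is_derive (fun t => f (Epar x t a ph)) r 0).
  { apply (is_derive_ext_loc (fun _ => 0)).
    - revert Hl. apply filter_imp. intros t Ht. symmetry. apply (supp_zero f x0 R); auto.
      + unfold inH3, Epar, pz; simpl. apply Yf_pos; auto.
      + lra.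
    - apply (is_derive_const (K := R_AbsRing) (V := R_NormedModule)). }
  apply is_derive_unique in Hd. apply is_derive_unique in H0d. rewrite <- Hd, H0d. reflexivity.
Qed.

Lemma dE_sq x r a ph :
  (Wf x r a * sin a * cos ph)^2 + (Wf x r a * sin a * sin ph)^2 + (- Wf x r a * (sinh r - cosh r * cos a))^2
  = Yf x r a ^ 2.
Proof.
  assert (Hph := sin2_cos2 ph). assert (Ha := sin2_cos2 a). unfold Rsqr in Hph, Ha.
  replace ((Wf x r a * sin a * cos ph)^2 + (Wf x r a * sin a * sin ph)^2 + (- Wf x r a * (sinh r - cosh r * cos a))^2)
    with (Wf x r a ^ 2 * (sin a * sin a * (sin ph * sin ph + cos ph * cos ph) + (sinh r - cosh r * cos a)^2)) by ring.
  rewrite Hph. replace (sin a * sin a * 1) with (1 - cos a * cos a) by lra.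
  assert (Hp := cosh_minus_sinh_cos r a).
  unfold Wf, Yf. unfold cosh, sinh in *.
  rewrite !exp_Ropp in *. assert (He : 0 < exp r) by apply exp_pos.
  set (e := exp r) in *.
  assert (Key : 0 < e * e + 1 - (e * e - 1) * cos a).
  { replace (e * e + 1 - (e * e - 1) * cos a) with (2 * e * ((e + / e) / 2 - (e - / e) / 2 * cos a)) by (field; intro; lra).
    apply Rmult_lt_0_compat; lra. }
  field. repeat split; intro; lra.
Qed.

Lemma comp_le_Y t Y : 0 <= Y -> t ^ 2 <= Y ^ 2 -> Rabs t <= Y.
Proof. apply sq_le_abs. Qed.

Lemma Dfun_bound d1 d2 d3 x r a ph Md B : inH3 x ->
  Rabs (d1 (Epar x r a ph)) <= Md -> Rabs (d2 (Epar x r a ph)) <= Md -> Rabs (d3 (Epar x r a ph)) <= Md ->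
  Yf x r a <= B -> Rabs (Dfun d1 d2 d3 x r a ph) <= 3 * Md * B.
Proof.
  intros Hx H1 H2 H3 HB. assert (HY := Yf_pos x r a Hx).
  assert (Hsq := dE_sq x r a ph).
  assert (h1 := pow2_ge_0 (Wf x r a * sin a * cos ph)).
  assert (h2 := pow2_ge_0 (Wf x r a * sin a * sin ph)).
  assert (h3 := pow2_ge_0 (- Wf x r a * (sinh r - cosh r * cos a))).
  assert (A1 : Rabs (Wf x r a * sin a * cos ph) <= B) by (apply comp_le_Y; [lra| nra]).
  assert (A2 : Rabs (Wf x r a * sin a * sin ph) <= B) by (apply comp_le_Y; [lra| nra]).
  assert (A3 : Rabs (- Wf x r a * (sinh r - cosh r * cos a)) <= B) by (apply comp_le_Y; [lra| nra]).
  unfold Dfun.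
  eapply Rle_trans; [apply Rabs_triang|]. eapply Rle_trans; [apply Rplus_le_compat_r; apply Rabs_triang|].
  assert (0 <= Md) by (assert (h := Rabs_pos (d1 (Epar x r a ph))); lra).
  assert (Rabs (d1 (Epar x r a ph) * (Wf x r a * sin a * cos ph)) <= Md * B) by (rewrite Rabs_mult; apply Rmult_le_compat; try apply Rabs_pos; lra).
  assert (Rabs (d2 (Epar x r a ph) * (Wf x r a * sin a * sin ph)) <= Md * B) by (rewrite Rabs_mult; apply Rmult_le_compat; try apply Rabs_pos; lra).
  assert (Rabs (d3 (Epar x r a ph) * (- Wf x r a * (sinh r - cosh r * cos a))) <= Md * B) by (rewrite (Rabs_mult (d3 _)); apply Rmult_le_compat; try apply Rabs_pos; lra).
  lra.
Qed.

Lemma cosh_ge1 R : 1 <= cosh R.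
Proof.
  unfold cosh. rewrite exp_Ropp. assert (He : 0 < exp R) by apply exp_pos.
  set (e := exp R) in *. clearbody e. apply Rmult_le_reg_r with (2 * e); [lra|].
  replace ((e + / e) / 2 * (2 * e)) with (e * e + 1) by (field; repeat split; intro; lra).
  assert (0 <= (e - 1) ^ 2) by apply pow2_ge_0. nra.
Qed.

Lemma cosh_le_exp R : 0 <= R -> cosh R <= exp R.
Proof.
  intros H. unfold cosh. assert (exp (- R) <= exp R) by (apply exp_mono; lra). lra.
Qed.

Lemma cosh_ge_half_exp r : exp r / 2 <= cosh r.
Proof. unfold cosh. assert (0 < exp (- r)) by apply exp_pos. lra. Qed.

Lemma exp2_ge4 : 4 <= exp 2.
Proof.
  replace 2 with (1 + 1) by ring. rewrite exp_plus. assert (H := exp_ineq1 1 ltac:(lra)). nra.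
Qed.

Lemma smean_id h x r : bcontH3 h -> inH3 x ->
  sinh r * spherical_mean h r x = / (4 * PI) * (sinh r * FnE h x r).
Proof.
  intros Hh Hx. unfold spherical_mean. rewrite sphere_E by auto.
  assert (hPI := PI_RGT_0).
  destruct (Req_dec (sinh r) 0) as [Z|Z].
  - rewrite Z. ring.
  - field. split; [intro; lra| exact Z].
Qed.

Lemma glob_bound f x0 R : bcontH3 f -> inH3 x0 -> 0 < R -> supp_in_ball f x0 R ->
  exists M, 0 <= M /\ forall y, inH3 y -> Rabs (f y) <= M.
Proof.
  intros Hf H0 HR Hs. set (C := cosh R). assert (HC := cosh_ge1 R). fold C in HC.
  destruct (box_bound f (px x0 - 2 * pz x0 * C, py x0 - 2 * pz x0 * C, pz x0 / (2 * C))
                        (px x0 + 2 * pz x0 * C, py x0 + 2 * pz x0 * C, 2 * pz x0 * C)) as [M0 HM0].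
  { change (0 < pz x0 / (2 * C)). apply Rdiv_lt_0_compat; [exact H0| lra]. }
  { intros p Hp. apply Hf. unfold in_box in Hp. destruct Hp as [_ [_ [Hz _]]].
    assert (0 < pz x0 / (2 * C)) by (apply Rdiv_lt_0_compat; [exact H0| lra]).
    unfold inH3. change (pz x0 / (2 * C) <= pz p) in Hz. lra. }
  exists (Rabs M0). split; [apply Rabs_pos|]. intros y Hy.
  destruct (Rle_dec (uf x0 y) C) as [Hu|Hu].
  - assert (h := HM0 y (u_box x0 y C H0 Hy HC Hu)). assert (h' := Rle_abs M0). lra.
  - rewrite (supp_zero f x0 R y H0 Hy Hs) by (unfold C in Hu; lra). rewrite Rabs_R0. apply Rabs_pos.
Qed.

Lemma reg_bound d x0 R : bcontH3 d -> inH3 x0 -> 0 < R ->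
  exists M, 0 <= M /\ forall y, inH3 y -> uf x0 y <= cosh R -> Rabs (d y) <= M.
Proof.
  intros Hf H0 HR. set (C := cosh R). assert (HC := cosh_ge1 R). fold C in HC.
  destruct (box_bound d (px x0 - 2 * pz x0 * C, py x0 - 2 * pz x0 * C, pz x0 / (2 * C))
                        (px x0 + 2 * pz x0 * C, py x0 + 2 * pz x0 * C, 2 * pz x0 * C)) as [M0 HM0].
  { change (0 < pz x0 / (2 * C)). apply Rdiv_lt_0_compat; [exact H0| lra]. }
  { intros p Hp. apply Hf. unfold in_box in Hp. destruct Hp as [_ [_ [Hz _]]].
    assert (0 < pz x0 / (2 * C)) by (apply Rdiv_lt_0_compat; [exact H0| lra]).
    unfold inH3. change (pz x0 / (2 * C) <= pz p) in Hz. lra. }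
  exists (Rabs M0). split; [apply Rabs_pos|]. intros y Hy Hu.
  assert (h := HM0 y (u_box x0 y C H0 Hy HC Hu)). assert (h' := Rle_abs M0). lra.
Qed.

Lemma is_derive_shift (h : R -> R) t0 t l : is_derive h (t - t0) l -> is_derive (fun s => h (s - t0)) t l.
Proof.
  intros H. assert (Hl : is_derive (fun s => s - t0) t 1) by (auto_derive; auto; ring).
  assert (X := is_derive_comp h (fun s => s - t0) t l 1 H Hl).
  unfold scal in X; simpl in X; unfold mult in X; simpl in X. rewrite Rmult_1_l in X. exact X.
Qed.

Lemma main_single (f g : pt -> R) (x0 : pt) (R tau0 : R) :
  0 < tau0 -> 0 < R -> inH3 x0 -> C2_H3 f -> C1_H3 g -> supp_in_ball f x0 R -> supp_in_ball g x0 R ->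
  exists K T, 0 < K /\ 0 < T /\ forall tau x, T <= tau -> tau0 < tau -> inH3 x ->
   exists l, derivable_pt_lim (fun s => sinh (s - tau0) * spherical_mean f (s - tau0) x) tau l /\
     Rabs (l + sinh (tau - tau0) * spherical_mean g (tau - tau0) x) <= K * exp (- tau).
Proof.
  intros Ht0 HR H0 [d1 [d2 [d3 [Hp [Hd1 [Hd2 Hd3]]]]]] Hg Hsf Hsg.
  apply C1_bcont in Hd1. apply C1_bcont in Hd2. apply C1_bcont in Hd3.
  assert (Hfc := partials_bcont f d1 d2 d3 Hp Hd1 Hd2 Hd3).
  assert (Hgc := C1_bcont g Hg).
  set (C := cosh R). assert (HC := cosh_ge1 R). fold C in HC.
  assert (hPI := PI_RGT_0).
  destruct (glob_bound f x0 R Hfc H0 HR Hsf) as [Mf [HMf0 HMf]].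
  destruct (glob_bound g x0 R Hgc H0 HR Hsg) as [Mg [HMg0 HMg]].
  destruct (reg_bound d1 x0 R Hd1 H0 HR) as [M1 [HM10 HM1]].
  destruct (reg_bound d2 x0 R Hd2 H0 HR) as [M2 [HM20 HM2]].
  destruct (reg_bound d3 x0 R Hd3 H0 HR) as [M3 [HM30 HM3]].
  set (Md := M1 + M2 + M3).
  set (MD := 3 * Md * (2 * pz x0 * C)).
  assert (Hz0 : 0 < pz x0) by exact H0.
  assert (HMD0 : 0 <= MD) by (unfold MD, Md; apply Rmult_le_pos; [lra| nra]).
  assert (HEin : forall x r a ph, inH3 x -> inH3 (Epar x r a ph)).
  { intros x r a ph Hx. unfold inH3. change (0 < Yf x r a). apply Yf_pos; auto. }
  assert (HDb : forall x r a ph, inH3 x -> Rabs (Dfun d1 d2 d3 x r a ph) <= MD).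
  { intros x r a ph Hx. destruct (Rle_dec (uf x0 (Epar x r a ph)) C) as [Hu|Hu].
    - assert (Hb := u_box x0 (Epar x r a ph) C H0 (HEin x r a ph Hx) HC Hu).
      destruct Hb as [_ [_ [_ HY]]]. change (Yf x r a <= 2 * pz x0 * C) in HY.
      unfold MD. apply Dfun_bound; auto.
      + assert (h := HM1 _ (HEin x r a ph Hx) Hu). unfold Md; lra.
      + assert (h := HM2 _ (HEin x r a ph Hx) Hu). unfold Md; lra.
      + assert (h := HM3 _ (HEin x r a ph Hx) Hu). unfold Md; lra.
    - rewrite (Dfun_zero f d1 d2 d3 x0 x r a ph R); auto. rewrite Rabs_R0; exact HMD0. unfold C in Hu; lra. }
  set (B := 3000 * (Mf + MD + Mg) * C ^ 2).
  assert (HB0 : 0 <= B) by (unfold B; apply Rmult_le_pos; [lra| nra]).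
  set (K := / (4 * PI) * B * 2 * exp tau0 + 1).
  assert (HK0 : 0 <= / (4 * PI) * B * 2 * exp tau0).
  { assert (0 < exp tau0) by apply exp_pos. assert (0 < / (4 * PI)) by (apply Rinv_0_lt_compat; lra).
    apply Rmult_le_pos; [|lra]. apply Rmult_le_pos; [|lra]. apply Rmult_le_pos; lra. }
  exists K, (tau0 + R + 2). split; [unfold K; lra|]. split; [lra|].
  intros tau x HT Htau Hx.
  set (r := tau - tau0).
  assert (Hr : R + 2 <= r) by (unfold r; lra). assert (Hr0 : 0 < r) by lra.
  set (c := cosh r). set (s := sinh r).
  assert (Hs0 : 0 < s) by (apply sinh_pos; lra).
  assert (Hsc : s < c) by apply cosh_gt_sinh.
  assert (Hc2C : 2 * C <= c).
  { assert (h1 := cosh_le_exp R ltac:(lra)). fold C in h1.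
    assert (h2 := cosh_ge_half_exp r). fold c in h2.
    assert (h3 : exp (R + 2) <= exp r) by (apply exp_mono; lra).
    rewrite exp_plus in h3. assert (h4 := exp2_ge4). assert (0 < exp R) by apply exp_pos. nra. }
  assert (Hc2 : 4 * C ^ 2 <= c ^ 2) by nra.
  set (DF := RInt (fun a => sin a * RInt (fun ph => Dfun d1 d2 d3 x r a ph) 0 (2*PI)) 0 PI).
  assert (BF : Rabs (FnE f x r) <= 3000 * Mf * C^2 / c^2).
  { unfold FnE, Jint. apply (measure_bound (fun a ph => f (Epar x r a ph)) (alf x0 x r) (b1f x0 x r) (b2f x0 x r) (b3f x0 x r) C c Mf); auto.
    - apply al_pos; auto.
    - apply al_b; auto.
    - intros a ph Hz. rewrite <- u_id in Hz by auto. apply (supp_zero f x0 R); auto.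
    - intros a ph. apply cont_Epar; auto.
    - intros a ph. rewrite Epar_per; reflexivity. }
  assert (BG : Rabs (FnE g x r) <= 3000 * Mg * C^2 / c^2).
  { unfold FnE, Jint. apply (measure_bound (fun a ph => g (Epar x r a ph)) (alf x0 x r) (b1f x0 x r) (b2f x0 x r) (b3f x0 x r) C c Mg); auto.
    - apply al_pos; auto.
    - apply al_b; auto.
    - intros a ph Hz. rewrite <- u_id in Hz by auto. apply (supp_zero g x0 R); auto.
    - intros a ph. apply cont_Epar; auto.
    - intros a ph. rewrite Epar_per; reflexivity. }
  assert (BD : Rabs DF <= 3000 * MD * C^2 / c^2).
  { unfold DF. apply (measure_bound (fun a ph => Dfun d1 d2 d3 x r a ph) (alf x0 x r) (b1f x0 x r) (b2f x0 x r) (b3f x0 x r) C c MD); auto.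
    - apply al_pos; auto.
    - apply al_b; auto.
    - intros a ph Hz. rewrite <- u_id in Hz by auto. apply (Dfun_zero f d1 d2 d3 x0 x r a ph R); auto.
    - intros a ph. apply cont_Dfun_aph; auto.
    - intros a ph. apply Dfun_per. }
  set (F := fun s0 => / (4 * PI) * (sinh (s0 - tau0) * FnE f x (s0 - tau0))).
  assert (HF : forall s0, F s0 = sinh (s0 - tau0) * spherical_mean f (s0 - tau0) x).
  { intros s0. unfold F. symmetry. apply smean_id; auto. }
  assert (HA : is_derive (fun s0 => sinh (s0 - tau0)) tau c).
  { apply (is_derive_shift sinh tau0 tau c). apply is_derive_Reals. apply derivable_pt_lim_sinh. }
  assert (HBd : is_derive (fun s0 => FnE f x (s0 - tau0)) tau DF).
  { apply (is_derive_shift (FnE f x) tau0 tau DF). apply is_derive_Fn; auto. }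
  assert (HM := is_derive_mult _ _ tau c DF HA HBd Rmult_comm).
  assert (HS := is_derive_scal _ tau (/ (4 * PI)) _ HM).
  exists (/ (4 * PI) * (c * FnE f x r + s * DF)). split.
  - apply is_derive_Reals. apply (is_derive_ext F); [exact HF|].
    unfold F. unfold plus, mult in HS; simpl in HS. exact HS.
  - unfold s. rewrite (smean_id g x r Hgc Hx). fold s.
    replace (/ (4 * PI) * (c * FnE f x r + s * DF) + / (4 * PI) * (s * FnE g x r))
      with (/ (4 * PI) * (c * FnE f x r + s * DF + s * FnE g x r)) by ring.
    rewrite Rabs_mult, (Rabs_right (/ (4 * PI))) by (left; apply Rinv_0_lt_compat; lra).
    assert (Hcpos : 0 < c) by lra.
    assert (Hsum : Rabs (c * FnE f x r + s * DF + s * FnE g x r) <= B / c).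
    { eapply Rle_trans; [apply Rabs_triang|]. eapply Rle_trans; [apply Rplus_le_compat_r; apply Rabs_triang|].
      rewrite !Rabs_mult, (Rabs_right c), (Rabs_right s) by lra.
      assert (X1 : c * Rabs (FnE f x r) <= c * (3000 * Mf * C^2 / c^2)) by (apply Rmult_le_compat_l; lra).
      assert (X2 : s * Rabs DF <= c * (3000 * MD * C^2 / c^2)).
      { apply Rmult_le_compat; try lra; apply Rabs_pos. }
      assert (X3 : s * Rabs (FnE g x r) <= c * (3000 * Mg * C^2 / c^2)).
      { apply Rmult_le_compat; try lra; apply Rabs_pos. }
      assert (E : c * (3000 * Mf * C^2 / c^2) + c * (3000 * MD * C^2 / c^2) + c * (3000 * Mg * C^2 / c^2) = B / c).
      { unfold B. field. lra. }
      lra. }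
    assert (Hinvc : B / c <= B * (2 * exp (- r))).
    { assert (h2 := cosh_ge_half_exp r). fold c in h2. assert (0 < exp r) by apply exp_pos.
      rewrite exp_Ropp. apply Rmult_le_compat_l; auto.
      replace (2 * / exp r) with (/ (exp r / 2)) by (field; lra).
      apply Rinv_le_contravar; lra. }
    assert (Her : exp (- r) = exp tau0 * exp (- tau)) by (unfold r; rewrite <- exp_plus; f_equal; ring).
    assert (Hip : 0 < / (4 * PI)) by (apply Rinv_0_lt_compat; lra).
    assert (Het : 0 < exp (- tau)) by apply exp_pos.
    apply Rle_trans with (/ (4 * PI) * (B * (2 * exp (- r)))).
    { apply Rmult_le_compat_l; lra. }
    rewrite Her. unfold K.
    replace (/ (4 * PI) * (B * (2 * (exp tau0 * exp (- tau)))))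
      with ((/ (4 * PI) * B * 2 * exp tau0) * exp (- tau)) by ring.
    nra.
Qed.

Theorem theorem4p1 (tau0 Rad : R) (x0 : pt) (f g : nat -> pt -> R) :
  0 < tau0 -> 0 < Rad -> inH3 x0 ->
  (forall mu : nat, (1 <= mu <= 3)%nat ->
     C2_H3 (f mu) /\ C1_H3 (g mu) /\
     supp_in_ball (f mu) x0 Rad /\ supp_in_ball (g mu) x0 Rad) ->
  exists C T : R, 0 < C /\ 0 < T /\
    forall mu : nat, (1 <= mu <= 3)%nat ->
    forall (tau : R) (x : pt), T <= tau -> tau0 < tau -> inH3 x ->
      exists l : R,
        derivable_pt_lim (fun s => sinh (s - tau0) * spherical_mean (f mu) (s - tau0) x) tau l /\
        Rabs (l + sinh (tau - tau0) * spherical_mean (g mu) (tau - tau0) x) <= C * exp (- tau).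
Proof.
  intros Ht0 HR H0 Hfg.
  destruct (Hfg 1%nat ltac:(lia)) as [A1 [B1 [C1 D1]]].
  destruct (Hfg 2%nat ltac:(lia)) as [A2 [B2 [C2 D2]]].
  destruct (Hfg 3%nat ltac:(lia)) as [A3 [B3 [C3 D3]]].
  destruct (main_single (f 1%nat) (g 1%nat) x0 Rad tau0 Ht0 HR H0 A1 B1 C1 D1) as [K1 [T1 [HK1 [HT1 P1]]]].
  destruct (main_single (f 2%nat) (g 2%nat) x0 Rad tau0 Ht0 HR H0 A2 B2 C2 D2) as [K2 [T2 [HK2 [HT2 P2]]]].
  destruct (main_single (f 3%nat) (g 3%nat) x0 Rad tau0 Ht0 HR H0 A3 B3 C3 D3) as [K3 [T3 [HK3 [HT3 P3]]]].
  exists (K1 + K2 + K3), (Rmax T1 (Rmax T2 T3)). split; [lra|]. split.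
  { eapply Rlt_le_trans; [exact HT1| apply Rmax_l]. }
  intros mu Hmu tau x HT Htau Hx.
  assert (HT1' : T1 <= tau) by (eapply Rle_trans; [apply Rmax_l| exact HT]).
  assert (HT2' : T2 <= tau) by (eapply Rle_trans; [eapply Rle_trans; [apply Rmax_l| apply Rmax_r]| exact HT]).
  assert (HT3' : T3 <= tau) by (eapply Rle_trans; [eapply Rle_trans; [apply Rmax_r| apply Rmax_r]| exact HT]).
  assert (He : 0 < exp (- tau)) by apply exp_pos.
  assert (Hmu' : mu = 1%nat \/ mu = 2%nat \/ mu = 3%nat) by lia.
  destruct Hmu' as [E|[E|E]]; subst mu.
  - destruct (P1 tau x HT1' Htau Hx) as [l [Hl Hb]]. exists l. split; auto. nra.
  - destruct (P2 tau x HT2' Htau Hx) as [l [Hl Hb]]. exists l. split; auto. nra.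
  - destruct (P3 tau x HT3' Htau Hx) as [l [Hl Hb]]. exists l. split; auto. nra.
Qed.
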